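(* Let $\lambda_0<\lambda_1$ be real numbers, let $\lambda_2,\dots,\lambda_n\in\mathbb{C}$, and suppose that $E_{(\lambda_2,\dots,\lambda_n)}$ is an extended Chebyshev space over $[a,b]$ ($a<b$) that is closed under complex conjugation. Let $p_{n,0},\dots,p_{n,n}$ be a Bernstein basis of $E_{(\lambda_0,\dots,\lambda_n)}$ for $\{a,b\}$ consisting of real-valued functions that are non-negative on $[a,b]$. Then there exist unique points $t_0,\dots,t_n\in[a,b]$ and unique positive coefficients $\alpha_0,\dots,\alpha_n$ such that the operator $B_n:C[a,b]\to E_{(\lambda_0,\dots,\lambda_n)}$, $B_nf=\sum_{k=0}^nf(t_k)\alpha_kp_{n,k}$, satisfies $B_n(e^{\lambda_0x})=e^{\lambda_0x}$ and $B_n(e^{\lambda_1x})=e^{\lambda_1x}$.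
   Context: For complex numbers $\mu_0,\dots,\mu_m$, the space of exponential polynomials is $E_{(\mu_0,\dots,\mu_m)}=\{f\in C^\infty(\mathbb{R},\mathbb{C}):(\frac{d}{dx}-\mu_0)\cdots(\frac{d}{dx}-\mu_m)f=0\}$ (of dimension $m+1$), considered as functions on $[a,b]$. It is closed under complex conjugation if $\bar f$ belongs to it whenever $f$ does. An $(m+1)$-dimensional space $V\subset C^m([a,b],\mathbb{C})$ is an extended Chebyshev space over $[a,b]$ if every non-zero $f\in V$ has at most $m$ zeros in $[a,b]$ counting multiplicities. A function has a zero of order $k$ at $c$ if $f(c)=\dots=f^{(k-1)}(c)=0\neq f^{(k)}(c)$ (one-sided at endpoints); a Bernstein basis for $\{a,b\}$ of an $(m+1)$-dimensional space is a system $p_{m,0},\dots,p_{m,m}$ in it with $p_{m,k}$ having a zero of order exactly $k$ at $a$ and exactly $m-k$ at $b$. *)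

(* Defs.v *)
From Stdlib Require Import Reals List.
From Coquelicot Require Import Coquelicot.
Import ListNotations.
Open Scope R_scope.

Definition CDn (k : nat) (f : R -> C) (x : R) : C :=
  (Derive_n (fun t => Re (f t)) k x, Derive_n (fun t => Im (f t)) k x).

Definition Csmooth (f : R -> C) : Prop :=
  forall (k : nat) (x : R),
    ex_derive_n (fun t => Re (f t)) k x /\ ex_derive_n (fun t => Im (f t)) k x.

Definition apply_ops (mus : list C) (f : R -> C) : R -> C :=
  fold_right (fun mu g => fun x => Cminus (CDn 1 g x) (Cmult mu (g x))) f mus.

Definition ExpPoly (mus : list C) (f : R -> C) : Prop :=
  Csmooth f /\ forall x : R, apply_ops mus f x = RtoC 0.

Definition zero_order_ge (f : R -> C) (c : R) (k : nat) : Prop :=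
  forall j : nat, (j < k)%nat -> CDn j f c = RtoC 0.

Definition zero_order_exact (f : R -> C) (c : R) (k : nat) : Prop :=
  zero_order_ge f c k /\ CDn k f c <> RtoC 0.

(* Zeros are given as a list of (point, multiplicity)
   pairs with distinct points. *)
Definition ExtChebyshev (m : nat) (V : (R -> C) -> Prop) (a b : R) : Prop :=
  forall f : R -> C, V f ->
    (exists x, a <= x <= b /\ f x <> RtoC 0) ->
    forall zs : list (R * nat),
      NoDup (map fst zs) ->
      (forall z, In z zs -> a <= fst z <= b /\ zero_order_ge f (fst z) (snd z)) ->
      (fold_right (fun z s => (snd z + s)%nat) 0%nat zs <= m)%nat.

Definition closed_under_conj (V : (R -> C) -> Prop) : Prop :=
  forall f, V f -> V (fun x => Cconj (f x)).

Definition BernsteinBasis (m : nat) (V : (R -> C) -> Prop) (a b : R)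
    (p : nat -> R -> C) : Prop :=
  forall k : nat, (k <= m)%nat ->
    V (p k) /\ zero_order_exact (p k) a k /\ zero_order_exact (p k) b (m - k).

Fixpoint Csum (F : nat -> C) (n : nat) : C :=
  match n with
  | O => F O
  | S k => Cplus (Csum F k) (F (S k))
  end.

Definition Bop (n : nat) (t alpha : nat -> R) (p : nat -> R -> C)
    (f : R -> R) (x : R) : C :=
  Csum (fun k => Cmult (RtoC (f (t k) * alpha k)) (p k x)) n.

(* Main.v *)
Require Import Defs.
From Stdlib Require Import Reals List Lra Lia Psatz FunctionalExtensionality Classical.
From Coquelicot Require Import Coquelicot.
Import ListNotations.
Open Scope R_scope.

Definition sm (f : R -> R) := forall k x, ex_derive_n f k x.

Lemma loc_all (P : R -> Prop) x : (forall y, P y) -> locally x P.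
Proof. intros H. apply filter_forall. exact H. Qed.

Lemma sm_ext f g : (forall x, f x = g x) -> sm f -> sm g.
Proof. intros H Hf k x. apply (ex_derive_n_ext f); auto. Qed.

Lemma sm_exd f x : sm f -> ex_derive f x.
Proof. intros H. exact (H 1%nat x). Qed.

Lemma Dn_D f k x : Derive_n (Derive f) k x = Derive_n f (S k) x.
Proof. replace (S k) with (k+1)%nat by lia. rewrite <- Derive_n_comp. reflexivity. Qed.

Lemma sm_D f : sm f -> sm (Derive f).
Proof.
  intros H k x. destruct k. exact I.
  simpl. apply ex_derive_ext with (f := Derive_n f (S k)).
  intros t. symmetry. apply Dn_D. exact (H (S (S k)) x).
Qed.

Lemma sm_plus f g : sm f -> sm g -> sm (fun x => f x + g x).
Proof. intros Hf Hg k x. apply ex_derive_n_plus; apply loc_all; intros; auto. Qed.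
Lemma sm_minus f g : sm f -> sm g -> sm (fun x => f x - g x).
Proof. intros Hf Hg k x. apply ex_derive_n_minus; apply loc_all; intros; auto. Qed.
Lemma sm_scal c f : sm f -> sm (fun x => c * f x).
Proof. intros Hf k x. apply ex_derive_n_scal_l; auto. Qed.
Lemma sm_const c : sm (fun _ => c).
Proof. intros k x. apply ex_derive_n_const. Qed.

Lemma Dn_plus f g k x : sm f -> sm g -> Derive_n (fun x => f x + g x) k x = Derive_n f k x + Derive_n g k x.
Proof. intros Hf Hg. apply Derive_n_plus; apply loc_all; intros; auto. Qed.
Lemma Dn_minus f g k x : sm f -> sm g -> Derive_n (fun x => f x - g x) k x = Derive_n f k x - Derive_n g k x.
Proof. intros Hf Hg. apply Derive_n_minus; apply loc_all; intros; auto. Qed.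

Lemma sumS (F : nat -> R) k : sum_n F (S k) = sum_n F k + F (S k).
Proof. rewrite Coquelicot.Hierarchy.sum_Sn. reflexivity. Qed.

Lemma sm_sum (F : nat -> R -> R) m : (forall k, sm (F k)) -> sm (fun x => sum_n (fun k => F k x) m).
Proof.
  intros H. induction m.
  - apply sm_ext with (F 0%nat). intros; rewrite sum_O; auto. auto.
  - apply sm_ext with (fun x => sum_n (fun k => F k x) m + F (S m) x).
    intros; rewrite sumS; auto. apply sm_plus; auto.
Qed.

Lemma Dn_sum (F : nat -> R -> R) m i x : (forall k, sm (F k)) ->
  Derive_n (fun x => sum_n (fun k => F k x) m) i x = sum_n (fun k => Derive_n (F k) i x) m.
Proof. intros H. apply Derive_n_sum_n. apply loc_all; intros; apply H. Qed.

Definition T (mu : R) (f : R -> R) : R -> R := fun x => Derive f x - mu * f x.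

Lemma sm_T mu f : sm f -> sm (T mu f).
Proof. intros H. apply sm_minus. apply sm_D; auto. apply sm_scal; auto. Qed.

Lemma Dn_T mu f i x : sm f -> Derive_n (T mu f) i x = Derive_n f (S i) x - mu * Derive_n f i x.
Proof.
  intros H. unfold T. rewrite Dn_minus. rewrite Dn_D, Derive_n_scal_l. reflexivity.
  apply sm_D; auto. apply sm_scal; auto.
Qed.

Lemma Dn_exp mu i x : Derive_n (fun y => exp (mu * y)) i x = mu ^ i * exp (mu * x).
Proof.
  revert x; induction i; intros x. simpl; ring.
  simpl. rewrite (Derive_ext _ (fun y => mu ^ i * exp (mu * y))) by auto.
  apply is_derive_unique. auto_derive. auto. ring.
Qed.

Lemma sm_exp mu : sm (fun y => exp (mu * y)).
Proof.
  intros k x. destruct k. exact I. simpl.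
  apply ex_derive_ext with (f := fun y => mu ^ k * exp (mu * y)).
  intros; symmetry; apply Dn_exp. auto_derive. auto.
Qed.

Ltac fixR := repeat match goal with
  | H : @eq (AbelianMonoid.sort _) ?x ?y |- _ => change (@eq R x y) in H
  | |- @eq (AbelianMonoid.sort _) ?x ?y => change (@eq R x y)
  | H : @eq (AbelianGroup.sort _) ?x ?y |- _ => change (@eq R x y) in H
  | |- @eq (AbelianGroup.sort _) ?x ?y => change (@eq R x y)
  | H : @eq (Ring.sort _) ?x ?y |- _ => change (@eq R x y) in H
  | |- @eq (Ring.sort _) ?x ?y => change (@eq R x y)
  end.


Lemma zE0 (u : R -> R) a b x : a < b -> a <= x <= b -> ex_derive u x ->
  (forall y, a <= y <= b -> u y = 0) -> Derive u x = 0.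
Proof.
  intros Hab Hx Hd H0.
  pose proof (Derive_correct _ _ Hd) as Hc. apply is_derive_Reals in Hc.
  destruct (Req_dec (Derive u x) 0) as [E|E]; auto. exfalso.
  destruct (Hc (Rabs (Derive u x))) as [d Hd'].
  apply Rabs_pos_lt; auto.
  pose proof (cond_pos d) as dpos.
  destruct (Rlt_or_le x b) as [Hxb|Hxb].
  - set (h := Rmin (d/2) (b - x)).
    assert (hpos : 0 < h) by (unfold h; apply Rmin_glb_lt; lra).
    assert (hle : h <= b - x) by apply Rmin_r.
    assert (hd : h <= d/2) by apply Rmin_l.
    specialize (Hd' h). rewrite (H0 (x+h)), (H0 x) in Hd' by lra.
    replace ((0 - 0) / h - Derive u x) with (- Derive u x) in Hd' by (field; lra).
    rewrite Rabs_Ropp in Hd'. assert (Rabs h < d) by (rewrite Rabs_pos_eq; lra).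
    specialize (Hd' ltac:(lra) H). lra.
  - set (h := - Rmin (d/2) (b - a)).
    assert (hpos : 0 < Rmin (d/2) (b-a)) by (apply Rmin_glb_lt; lra).
    assert (hle : Rmin (d/2) (b-a) <= b - a) by apply Rmin_r.
    assert (hd : Rmin (d/2) (b-a) <= d/2) by apply Rmin_l.
    specialize (Hd' h). rewrite (H0 (x+h)), (H0 x) in Hd' by (unfold h; lra).
    replace ((0 - 0) / h - Derive u x) with (- Derive u x) in Hd' by (field; unfold h; lra).
    rewrite Rabs_Ropp in Hd'. assert (Rabs h < d) by (unfold h; rewrite Rabs_left; lra).
    specialize (Hd' ltac:(unfold h; lra) H). lra.
Qed.

Lemma zE1 (u : R -> R) a b : a < b -> sm u -> (forall y, a <= y <= b -> u y = 0) ->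
  forall k x, a <= x <= b -> Derive_n u k x = 0.
Proof.
  intros Hab Hs H0 k. induction k; intros x Hx.
  - simpl; auto.
  - simpl. apply (zE0 _ a b); auto. exact (Hs (S k) x).
Qed.

Lemma zE2 (u w : R -> R) a b : a < b -> sm u -> sm w -> (forall y, a <= y <= b -> u y = w y) ->
  forall k x, a <= x <= b -> Derive_n u k x = Derive_n w k x.
Proof.
  intros Hab Hu Hw H k x Hx.
  assert (Derive_n (fun y => u y - w y) k x = 0).
  { apply (zE1 _ a b); auto. apply sm_minus; auto. intros y Hy; rewrite H; auto; ring. }
  rewrite Dn_minus in H0; auto. lra.
Qed.

Lemma sm_dpl f x : sm f -> derivable_pt_lim f x (Derive f x).
Proof. intros H. apply is_derive_Reals. apply Derive_correct. apply sm_exd; auto. Qed.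

Lemma sm_cont f x : sm f -> continuity_pt f x.
Proof. intros H. apply derivable_continuous_pt. exists (Derive f x). apply sm_dpl; auto. Qed.

Lemma sign_a (g : R -> R) a j : sm g -> (forall i, (i < j)%nat -> Derive_n g i a = 0) ->
  Derive_n g j a > 0 -> exists d, d > 0 /\ forall x, a < x < a + d -> g x > 0.
Proof.
  revert g. induction j; intros g Hs Hz Hp.
  - simpl in Hp. destruct (sm_cont g a Hs (g a) Hp) as [d [dpos Hd]].
    exists d; split; auto. intros x Hx.
    assert (R_dist (g x) (g a) < g a).
    { apply Hd. split. unfold D_x, no_cond; split; auto. lra. simpl; unfold R_dist.
      rewrite Rabs_pos_eq; lra. }
    unfold R_dist in H. apply Rabs_lt_between in H. lra.
  - destruct (IHj (Derive g)) as [d [dpos Hd]].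
    apply sm_D; auto.
    intros i Hi. rewrite Dn_D. apply Hz. lia.
    rewrite Dn_D; auto.
    exists d; split; auto. intros x Hx.
    destruct (MVT_cor2 g (Derive g) a x) as [c [Hc1 Hc2]]. lra.
    intros; apply sm_dpl; auto.
    assert (g a = 0) by (apply (Hz 0%nat); lia).
    specialize (Hd c ltac:(lra)). nra.
Qed.

Lemma sign_b (g : R -> R) b j : sm g -> (forall i, (i < j)%nat -> Derive_n g i b = 0) ->
  (-1) ^ j * Derive_n g j b > 0 -> exists d, d > 0 /\ forall x, b - d < x < b -> g x > 0.
Proof.
  intros Hs Hz Hp.
  set (h := fun y => g (- y)).
  assert (Hh : forall i x, Derive_n h i x = (-1) ^ i * Derive_n g i (- x)).
  { intros. unfold h. apply Derive_n_comp_opp. apply loc_all; intros; apply Hs. }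
  assert (hs : sm h).
  { intros k x. unfold h. apply ex_derive_n_comp_opp. apply loc_all; intros; apply Hs. }
  destruct (sign_a h (-b) j hs) as [d [dpos Hd]].
  intros i Hi. rewrite Hh, Ropp_involutive, Hz; auto; ring.
  rewrite Hh, Ropp_involutive; auto.
  exists d; split; auto. intros x Hx. specialize (Hd (-x) ltac:(lra)). unfold h in Hd.
  rewrite Ropp_involutive in Hd; auto.
Qed.


Lemma pos_a (q : R -> R) a b k : a < b -> sm q -> (forall x, a <= x <= b -> 0 <= q x) ->
  (forall i, (i < k)%nat -> Derive_n q i a = 0) -> Derive_n q k a <> 0 -> Derive_n q k a > 0.
Proof.
  intros Hab Hs Hn Hz Hk.
  destruct (Rlt_or_le 0 (Derive_n q k a)) as [H|H]; auto. exfalso.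
  destruct (sign_a (fun x => - q x) a k) as [d [dpos Hd]].
  intros m x; apply ex_derive_n_opp; apply Hs.
  intros i Hi; rewrite Derive_n_opp, Hz; auto; ring.
  rewrite Derive_n_opp. lra.
  set (x := a + Rmin d (b - a) / 2).
  assert (0 < Rmin d (b-a)) by (apply Rmin_glb_lt; lra).
  pose proof (Rmin_l d (b-a)). pose proof (Rmin_r d (b-a)).
  specialize (Hd x ltac:(unfold x; lra)). specialize (Hn x ltac:(unfold x; lra)). lra.
Qed.

Lemma pos_b (q : R -> R) a b k : a < b -> sm q -> (forall x, a <= x <= b -> 0 <= q x) ->
  (forall i, (i < k)%nat -> Derive_n q i b = 0) -> Derive_n q k b <> 0 -> (-1) ^ k * Derive_n q k b > 0.
Proof.
  intros Hab Hs Hn Hz Hk.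
  assert ((-1) ^ k <> 0) by (apply pow_nonzero; lra).
  destruct (Rlt_or_le 0 ((-1) ^ k * Derive_n q k b)) as [H1|H1]; auto. exfalso.
  assert ((-1) ^ k * Derive_n q k b <> 0) by (apply Rmult_integral_contrapositive; auto).
  destruct (sign_b (fun x => - q x) b k) as [d [dpos Hd]].
  intros m x; apply ex_derive_n_opp; apply Hs.
  intros i Hi; rewrite Derive_n_opp, Hz; auto; ring.
  rewrite Derive_n_opp. lra.
  set (x := b - Rmin d (b - a) / 2).
  assert (0 < Rmin d (b-a)) by (apply Rmin_glb_lt; lra).
  pose proof (Rmin_l d (b-a)). pose proof (Rmin_r d (b-a)).
  specialize (Hd x ltac:(unfold x; lra)). specialize (Hn x ltac:(unfold x; lra)). lra.
Qed.

Lemma dpl_expG mu G c : sm G ->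
  derivable_pt_lim (fun t => exp (- mu * t) * G t) c (exp (- mu * c) * T mu G c).
Proof.
  intros Hs. apply is_derive_Reals. unfold T.
  pose proof (Derive_correct G c (sm_exd G c Hs)) as HG.
  assert (He : is_derive (fun t => exp (- mu * t)) c (- mu * exp (- mu * c))).
  { auto_derive; auto. ring. }
  pose proof (is_derive_mult _ _ c _ _ He HG ltac:(intros; apply Rmult_comm)) as HM.
  replace (exp (- mu * c) * (Derive G c - mu * G c)) with (plus (mult (- mu * exp (- mu * c)) (G c)) (mult (exp (- mu * c)) (Derive G c))).
  exact HM. unfold plus, mult; simpl. ring.
Qed.

Lemma rolleT mu G x y : sm G -> x < y -> G x = 0 -> G y = 0 -> exists c, x < c < y /\ T mu G c = 0.
Proof.
  intros Hs Hxy Hx Hy.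
  destruct (MVT_cor2 (fun t => exp (- mu * t) * G t) (fun t => exp (- mu * t) * T mu G t) x y Hxy)
    as [c [Hc1 Hc2]].
  intros; apply dpl_expG; auto.
  exists c; split; auto. rewrite Hx, Hy in Hc1.
  assert (exp (- mu * c) > 0) by apply exp_pos.
  assert (exp (- mu * c) * T mu G c = 0).
  { apply Rmult_eq_reg_r with (y - x). lra. lra. }
  apply Rmult_integral in H0. lra.
Qed.

Lemma constT mu G a b : sm G -> a <= b -> (forall x, a <= x <= b -> T mu G x = 0) ->
  forall x, a <= x <= b -> exp (- mu * x) * G x = exp (- mu * a) * G a.
Proof.
  intros Hs Hab H x Hx. destruct (Req_dec x a) as [E|E]. subst; auto.
  destruct (MVT_cor2 (fun t => exp (- mu * t) * G t) (fun t => exp (- mu * t) * T mu G t) a x)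
    as [c [Hc1 Hc2]]. lra.
  intros; apply dpl_expG; auto.
  rewrite H in Hc1 by lra. lra.
Qed.

Fixpoint chain (lo : R) (zs : list R) (hi : R) : Prop :=
  match zs with nil => lo < hi | z :: r => lo < z /\ chain z r hi end.

Lemma chain_lo lo lo' zs hi : lo' <= lo -> chain lo zs hi -> chain lo' zs hi.
Proof. destruct zs; simpl; intros H1 H2. lra. destruct H2; split; auto. lra. Qed.

Lemma chain_hi lo zs hi hi' : hi <= hi' -> chain lo zs hi -> chain lo zs hi'.
Proof. revert lo; induction zs; simpl; intros. lra. destruct H0; split; auto. Qed.

Lemma chain_lt lo zs hi : chain lo zs hi -> lo < hi.
Proof. revert lo; induction zs; simpl; intros; auto. destruct H. specialize (IHzs _ H0). lra. Qed.

Lemma chain_in lo zs hi z : chain lo zs hi -> In z zs -> lo < z < hi.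
Proof.
  revert lo; induction zs; simpl; intros lo H Hi. contradiction.
  destruct H. destruct Hi. subst. split; auto. eapply chain_lt; eauto.
  specialize (IHzs _ H0 H1). lra.
Qed.

Lemma chain_app lo l z hi : chain lo (l ++ [z]) hi -> chain lo l z /\ z < hi.
Proof. revert lo; induction l; simpl; intros lo H. auto. destruct H. destruct (IHl _ H0). auto. Qed.

Lemma chain_nodup lo zs hi : chain lo zs hi -> NoDup zs.
Proof.
  revert lo; induction zs; simpl; intros lo H. constructor.
  destruct H. constructor. intros Hi. pose proof (chain_in _ _ _ _ H0 Hi). lra.
  eauto.
Qed.

Lemma R2 mu G : sm G -> forall zs x y, G x = 0 -> (forall z, In z zs -> G z = 0) ->
  chain x zs y -> G y = 0 ->
  exists zs', length zs' = S (length zs) /\ chain x zs' y /\ forall c, In c zs' -> T mu G c = 0.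
Proof.
  intros Hs zs. induction zs; intros x y Hx Hz Hc Hy; simpl in *.
  - destruct (rolleT mu G x y) as [c [Hc1 Hc2]]; auto.
    exists [c]. simpl. split; auto. split. lra. intros c' [E|[]]; subst; auto.
  - destruct Hc as [Hxa Hc].
    destruct (rolleT mu G x a) as [c [Hc1 Hc2]]; auto.
    destruct (IHzs a y) as [zs' [H1 [H2 H3]]]; auto.
    exists (c :: zs'). simpl. split; auto. split. split. lra. apply chain_lo with a; auto. lra.
    intros c' [E|E]; subst; auto.
Qed.

Definition ordge (G : R -> R) c m := forall i, (i < m)%nat -> Derive_n G i c = 0.

Definition cfg_bound (a b : R) (G : R -> R) (K : nat) : Prop :=
  (exists x, a <= x <= b /\ G x <> 0) ->
  forall al be zs, ordge G a al -> ordge G b be -> chain a zs b ->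
  (forall z, In z zs -> G z = 0) -> (al + be + length zs <= K)%nat.

Lemma ordge_T mu G c m : sm G -> ordge G c (S m) -> ordge (T mu G) c m.
Proof. intros Hs H i Hi. rewrite Dn_T; auto. rewrite !H by lia. ring. Qed.

Lemma ordge_0 G c m : ordge G c m -> (1 <= m)%nat -> G c = 0.
Proof. intros H Hm. apply (H 0%nat). lia. Qed.

Lemma cfg_rolle mu a b G K : a < b -> sm G -> cfg_bound a b (T mu G) K -> cfg_bound a b G (S K).
Proof.
  intros Hab Hs HB Hnz al be zs Ha Hb Hc Hz.
  destruct (classic (exists x, a <= x <= b /\ T mu G x <> 0)) as [Hn|Hn].
  2:{ assert (HT : forall x, a <= x <= b -> T mu G x = 0).
      { intros x Hx. destruct (Req_dec (T mu G x) 0); auto. exfalso; apply Hn; eauto. }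
      assert (Hga : G a <> 0).
      { intros E. destruct Hnz as [x [Hx Hgx]]. apply Hgx.
        pose proof (constT mu G a b Hs ltac:(lra) HT x Hx). rewrite E in H.
        assert (exp (- mu * x) > 0) by apply exp_pos. nra. }
      assert (Hall : forall x, a <= x <= b -> G x <> 0).
      { intros x Hx E. pose proof (constT mu G a b Hs ltac:(lra) HT x Hx). rewrite E in H.
        assert (exp (- mu * a) > 0) by apply exp_pos.
        assert (exp (- mu * a) * G a <> 0) by (apply Rmult_integral_contrapositive; lra). lra. }
      destruct al. 2:{ exfalso. apply (Hall a). lra. apply (ordge_0 _ _ _ Ha). lia. }
      destruct be. 2:{ exfalso. apply (Hall b). lra. apply (ordge_0 _ _ _ Hb). lia. }
      destruct zs as [|z zs]. simpl; lia.
      exfalso. pose proof (chain_in _ _ _ z Hc (or_introl eq_refl)).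
      apply (Hall z). lra. apply Hz. left; auto. }
  destruct al as [|al']; destruct be as [|be'];
  try (assert (HaT : ordge (T mu G) a al') by (apply ordge_T; auto));
  try (assert (HbT : ordge (T mu G) b be') by (apply ordge_T; auto)).
  - destruct zs as [|z zs]. simpl; lia.
    destruct zs as [|y l] using rev_ind. simpl; lia.
    clear IHl. simpl in Hc. destruct Hc as [Haz Hc]. apply chain_app in Hc. destruct Hc as [Hc Hyb].
    destruct (R2 mu G Hs l z y) as [zs' [H1 [H2 H3]]]; auto.
    apply Hz; simpl; auto. intros w Hw; apply Hz; simpl; right; apply in_or_app; auto.
    apply Hz; simpl; right; apply in_or_app; simpl; auto.
    specialize (HB Hn 0%nat 0%nat zs' ltac:(intros i Hi; lia) ltac:(intros i Hi; lia)).
    simpl length; rewrite length_app; simpl length.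
    assert (chain a zs' b). { apply chain_lo with z. lra. apply chain_hi with y. lra. auto. }
    specialize (HB H H3). lia.
  - destruct zs as [|z zs].
    + specialize (HB Hn 0%nat be' [] ltac:(intros i Hi; lia) HbT ltac:(simpl; lra) ltac:(simpl; tauto)). simpl in *; lia.
    + simpl in Hc. destruct Hc as [Haz Hc].
      destruct (R2 mu G Hs zs z b) as [zs' [H1 [H2 H3]]]; auto.
      apply Hz; simpl; auto. intros w Hw; apply Hz; simpl; auto.
      apply (ordge_0 _ _ _ Hb). lia.
      assert (chain a zs' b) by (apply chain_lo with z; auto; lra).
      specialize (HB Hn 0%nat be' zs' ltac:(intros i Hi; lia) HbT H H3). simpl in *; lia.
  - destruct zs as [|y l] using rev_ind.
    + specialize (HB Hn al' 0%nat [] HaT ltac:(intros i Hi; lia) ltac:(simpl; lra) ltac:(simpl; tauto)). simpl in *; lia.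
    + clear IHl. apply chain_app in Hc. destruct Hc as [Hc Hyb].
      destruct (R2 mu G Hs l a y) as [zs' [H1 [H2 H3]]]; auto.
      apply (ordge_0 _ _ _ Ha). lia.
      intros w Hw; apply Hz; apply in_or_app; auto.
      apply Hz; apply in_or_app; simpl; auto.
      assert (chain a zs' b) by (apply chain_hi with y; auto; lra).
      specialize (HB Hn al' 0%nat zs' HaT ltac:(intros i Hi; lia) H H3). rewrite length_app; simpl length; lia.
  - destruct (R2 mu G Hs zs a b) as [zs' [H1 [H2 H3]]]; auto.
    apply (ordge_0 _ _ _ Ha). lia. apply (ordge_0 _ _ _ Hb). lia.
    specialize (HB Hn al' be' zs' HaT HbT H2 H3). lia.
Qed.


Lemma sum_zero (F : nat -> R) m : (forall k, (k <= m)%nat -> F k = 0) -> sum_n F m = 0.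
Proof.
  intros H. induction m. rewrite sum_O; auto.
  rewrite sumS, IHm. rewrite H by lia. (fixR; ring). intros; apply H; lia.
Qed.

Lemma sum_first (F : nat -> R) m : (forall k, (1 <= k <= m)%nat -> F k = 0) -> sum_n F m = F 0%nat.
Proof.
  intros H. induction m. rewrite sum_O; auto.
  rewrite sumS, IHm. rewrite (H (S m)) by lia. (fixR; ring). intros; apply H; lia.
Qed.

Lemma sum_last (F : nat -> R) m : (forall k, (k < m)%nat -> F k = 0) -> sum_n F m = F m.
Proof.
  intros H. destruct m. rewrite sum_O; auto.
  rewrite sumS, sum_zero. (fixR; ring). intros; apply H; lia.
Qed.

Lemma sum_split (F : nat -> R) j N : (j <= N)%nat -> sum_n F N = sum_n F j + sum_n_m F (S j) N.
Proof. intros H. unfold sum_n. rewrite (sum_n_m_Chasles F 0 j N) by lia. reflexivity. Qed.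

Lemma tail_zero (F : nat -> R) j N : (forall k, (S j <= k <= N)%nat -> F k = 0) -> sum_n_m F (S j) N = 0.
Proof.
  intros H. rewrite (sum_n_m_ext_loc F (fun _ => zero)). rewrite sum_n_m_const_zero. reflexivity.
  intros; apply H; auto.
Qed.

Lemma tail_first (F : nat -> R) j N : (S j <= N)%nat -> (forall k, (S (S j) <= k <= N)%nat -> F k = 0) ->
  sum_n_m F (S j) N = F (S j).
Proof.
  intros H1 H2. rewrite (sum_n_m_Chasles F (S j) (S j) N) by lia.
  rewrite sum_n_n. rewrite tail_zero by auto. change (F (S j) + 0 = F (S j)). (fixR; ring).
Qed.

Definition gfun (q : nat -> R -> R) (mu : R) (w : nat -> R) (j : nat) : R -> R :=
  fun x => sum_n (fun k => w k * T mu (q k) x) j.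

Lemma sm_gfun q mu w j : (forall k, sm (q k)) -> sm (gfun q mu w j).
Proof. intros H. unfold gfun. apply sm_sum. intros k. apply sm_scal. apply sm_T. auto. Qed.

Lemma Dn_gfun q mu w j i x : (forall k, sm (q k)) ->
  Derive_n (gfun q mu w j) i x = sum_n (fun k => w k * (Derive_n (q k) (S i) x - mu * Derive_n (q k) i x)) j.
Proof.
  intros H. unfold gfun. rewrite Dn_sum. apply sum_n_ext. intros k.
  rewrite Derive_n_scal_l, Dn_T; auto.
  intros k. apply sm_scal, sm_T; auto.
Qed.

Section Core.
Variables (a b : R) (N : nat) (q : nat -> R -> R) (mu : R) (w : nat -> R).
Hypothesis Hab : a < b.
Hypothesis Hs : forall k, sm (q k).
Hypothesis Hnn : forall k x, (k <= N)%nat -> a <= x <= b -> 0 <= q k x.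
Hypothesis Ha : forall k, (k <= N)%nat -> ordge (q k) a k /\ Derive_n (q k) k a <> 0.
Hypothesis Hb : forall k, (k <= N)%nat -> ordge (q k) b (N - k) /\ Derive_n (q k) (N - k) b <> 0.
Hypothesis Hexp : forall x, a <= x <= b -> exp (mu * x) = sum_n (fun k => w k * q k x) N.

Lemma Wsum_zero i x : a <= x <= b ->
  sum_n (fun k => w k * (Derive_n (q k) (S i) x - mu * Derive_n (q k) i x)) N = 0.
Proof.
  intros Hx.
  assert (Hd : forall m, sum_n (fun k => w k * Derive_n (q k) m x) N = mu ^ m * exp (mu * x)).
  { intros m. rewrite <- Dn_exp.
    rewrite (zE2 (fun y => exp (mu * y)) (fun y => sum_n (fun k => w k * q k y) N) a b); auto.
    rewrite Dn_sum. apply sum_n_ext; intros; rewrite Derive_n_scal_l; auto.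
    intros; apply sm_scal; auto. apply sm_exp. apply sm_sum. intros; apply sm_scal; auto. }
  transitivity (sum_n (fun k => w k * Derive_n (q k) (S i) x) N - mu * sum_n (fun k => w k * Derive_n (q k) i x) N).
  2:{ rewrite !Hd. simpl. (fixR; ring). }
  assert (forall u v : nat -> R, sum_n (fun k => u k - mu * v k) N = sum_n u N - mu * sum_n v N).
  { intros u v. clear. induction N. rewrite !sum_O; auto. rewrite !sumS, IHn. (fixR; ring). }
  rewrite <- H. apply sum_n_ext; intros; (fixR; ring).
Qed.

Lemma gder_a j : (j < N)%nat ->
  ordge (gfun q mu w j) a j /\
  Derive_n (gfun q mu w j) j a = - (w (S j) * Derive_n (q (S j)) (S j) a).
Proof.
  intros Hj.
  assert (Hsp : forall i, Derive_n (gfun q mu w j) i a =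
     - sum_n_m (fun k => w k * (Derive_n (q k) (S i) a - mu * Derive_n (q k) i a)) (S j) N).
  { intros i. rewrite Dn_gfun by auto. pose proof (Wsum_zero i a ltac:((fixR; lra))).
    rewrite (sum_split _ j N) in H by lia. (fixR; lra). }
  split.
  - intros i Hi. rewrite Hsp, tail_zero. (fixR; ring).
    intros k Hk. destruct (Ha k ltac:(lia)) as [Hk1 _]. rewrite !Hk1 by lia. (fixR; ring).
  - rewrite Hsp, tail_first; auto.
    destruct (Ha (S j) ltac:(lia)) as [Hk1 _]. rewrite (Hk1 j) by lia. (fixR; ring).
    intros k Hk. destruct (Ha k ltac:(lia)) as [Hk1 _]. rewrite !Hk1 by lia. (fixR; ring).
Qed.

Lemma gder_b j : (j < N)%nat ->
  ordge (gfun q mu w j) b (N - 1 - j) /\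
  Derive_n (gfun q mu w j) (N - 1 - j) b = w j * Derive_n (q j) (N - j) b.
Proof.
  intros Hj. split.
  - intros i Hi. rewrite Dn_gfun by auto. apply sum_zero. intros k Hk.
    destruct (Hb k ltac:(lia)) as [Hk1 _]. rewrite !Hk1 by lia. (fixR; ring).
  - rewrite Dn_gfun by auto. rewrite sum_last.
    destruct (Hb j ltac:(lia)) as [Hk1 _]. rewrite (Hk1 (N - 1 - j)%nat) by lia.
    replace (S (N - 1 - j)) with (N - j)%nat by lia. (fixR; ring).
    intros k Hk. destruct (Hb k ltac:(lia)) as [Hk1 _]. rewrite !Hk1 by lia. (fixR; ring).
Qed.

Hypothesis Hcfg : forall j, (j < N)%nat -> cfg_bound a b (gfun q mu w j) (N - 1).

Lemma gsign_b j : (j < N)%nat -> w j > 0 ->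
  (-1) ^ (N - 1 - j) * Derive_n (gfun q mu w j) (N - 1 - j) b < 0.
Proof.
  intros Hj Hw. destruct (gder_b j Hj) as [_ E]. rewrite E.
  destruct (Hb j ltac:(lia)) as [Hz Hnz].
  pose proof (pos_b (q j) a b (N - j) Hab (Hs j) (fun x0 => Hnn j x0 ltac:(lia)) Hz Hnz).
  replace (N - j)%nat with (S (N - 1 - j)) in H by lia. rewrite <- tech_pow_Rmult in H.
  replace (N - j)%nat with (S (N - 1 - j)) by lia.
  assert (HX : (-1) ^ (N - 1 - j) * Derive_n (q j) (S (N - 1 - j)) b < 0) by lra.
  replace ((-1) ^ (N - 1 - j) * (w j * Derive_n (q j) (S (N - 1 - j)) b)) with (w j * ((-1) ^ (N - 1 - j) * Derive_n (q j) (S (N - 1 - j)) b)) by ring.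
  assert (0 < w j * (- ((-1) ^ (N - 1 - j) * Derive_n (q j) (S (N - 1 - j)) b))) by (apply Rmult_lt_0_compat; lra).
  lra.
Qed.

Lemma g_nonzero j : (j < N)%nat -> w j > 0 -> exists x, a <= x <= b /\ gfun q mu w j x <> 0.
Proof.
  intros Hj Hw. apply NNPP. intros Hn.
  assert (forall y, a <= y <= b -> gfun q mu w j y = 0).
  { intros y Hy. apply NNPP; intros Hne; apply Hn; eauto. }
  pose proof (gsign_b j Hj Hw). rewrite (zE1 _ a b Hab (sm_gfun q mu w j Hs) H) in H0 by (fixR; lra). (fixR; lra).
Qed.

Lemma g_no_interior j : (j < N)%nat -> w j > 0 -> forall z, a < z < b -> gfun q mu w j z <> 0.
Proof.
  intros Hj Hw z Hz E. pose proof (Hcfg j Hj (g_nonzero j Hj Hw) j (N - 1 - j)%nat [z]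
    (proj1 (gder_a j Hj)) (proj1 (gder_b j Hj))).
  simpl in H. specialize (H ltac:((fixR; lra)) ltac:(intros z' [E'|[]]; subst; auto)). lia.
Qed.

Lemma pick_pt (d : R) : d > 0 -> exists x, a < x < b /\ x < a + d.
Proof.
  intros Hd. exists (a + Rmin d (b - a) / 2).
  assert (0 < Rmin d (b-a)) by (apply Rmin_glb_lt; (fixR; lra)).
  pose proof (Rmin_l d (b-a)). pose proof (Rmin_r d (b-a)). (fixR; lra).
Qed.

Lemma pick_pt_b (d : R) (y : R) : d > 0 -> y < b -> exists x, a < x < b /\ b - d < x /\ y < x.
Proof.
  intros Hd Hy. set (m := Rmax (b - d) (Rmax a y)).
  assert (m < b). { unfold m. apply Rmax_lub_lt. (fixR; lra). apply Rmax_lub_lt; (fixR; lra). }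
  exists ((m + b) / 2).
  pose proof (Rmax_l (b-d) (Rmax a y)). pose proof (Rmax_r (b-d) (Rmax a y)).
  pose proof (Rmax_l a y). pose proof (Rmax_r a y). fold m in H0, H1. (fixR; lra).
Qed.

Lemma core_pos : forall k, (k <= N)%nat -> w k > 0.
Proof.
  induction k; intros Hk.
  - pose proof (Hexp a ltac:((fixR; lra))). rewrite sum_first in H.
    2:{ intros k Hk1. destruct (Ha k ltac:(lia)) as [Hz _]. pose proof (Hz 0%nat ltac:(lia)) as Hq; simpl in Hq; rewrite Hq; ring. }
    destruct (Ha 0%nat ltac:(lia)) as [Hz Hnz].
    pose proof (pos_a (q 0%nat) a b 0 Hab (Hs 0%nat) (fun x0 => Hnn 0%nat x0 ltac:(lia)) Hz Hnz). simpl in H0.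
    pose proof (exp_pos (mu * a)).
    destruct (Rlt_or_le 0 (w 0%nat)); auto. (fixR; nra).
  - assert (Hw : w k > 0) by (apply IHk; lia). clear IHk.
    assert (Hj : (k < N)%nat) by lia.
    destruct (Ha (S k) Hk) as [Hz Hnz].
    pose proof (pos_a (q (S k)) a b (S k) Hab (Hs (S k)) (fun x0 => Hnn (S k) x0 Hk) Hz Hnz) as HP.
    destruct (gder_a k Hj) as [Ha1 Ea].
    destruct (Rlt_or_le 0 (w (S k))) as [Hp|Hp]; auto. exfalso.
    destruct (Req_dec (w (S k)) 0) as [zE0|zE0].
    + assert (ordge (gfun q mu w k) a (S k)).
      { intros i Hi. destruct (Nat.eq_dec i k). subst. rewrite Ea, zE0. (fixR; ring). apply Ha1. lia. }
      pose proof (Hcfg k Hj (g_nonzero k Hj Hw) (S k) (N - 1 - k)%nat [] H (proj1 (gder_b k Hj))).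
      simpl in H0. specialize (H0 ltac:((fixR; lra)) ltac:(tauto)). lia.
    + destruct (sign_a (gfun q mu w k) a k (sm_gfun q mu w k Hs) Ha1) as [d1 [d1p Hd1]].
      rewrite Ea. (fixR; nra).
      pose proof (gsign_b k Hj Hw) as Hsb.
      destruct (sign_b (fun x => - gfun q mu w k x) b (N - 1 - k)) as [d2 [d2p Hd2]].
      intros m x; apply ex_derive_n_opp; apply sm_gfun; auto.
      intros i Hi. rewrite Derive_n_opp, (proj1 (gder_b k Hj)); auto. (fixR; ring).
      rewrite Derive_n_opp. (fixR; lra).
      destruct (pick_pt d1 d1p) as [x1 [Hx1 Hx1']].
      destruct (pick_pt_b d2 x1 d2p ltac:((fixR; lra))) as [x2 [Hx2 [Hx2' Hx2'']]].
      specialize (Hd1 x1 ltac:((fixR; lra))). specialize (Hd2 x2 ltac:((fixR; lra))).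
      destruct (IVT (fun x => - gfun q mu w k x) x1 x2) as [z [Hz1 Hz2]].
      intros x. apply continuity_pt_opp. apply sm_cont. apply sm_gfun; auto.
      (fixR; lra). (fixR; lra). (fixR; lra).
      assert (z <> x1) by (intros E; subst; (fixR; lra)). assert (z <> x2) by (intros E; subst; (fixR; lra)).
      apply (g_no_interior k Hj Hw z). (fixR; lra). (fixR; lra).
Qed.

Lemma g_nonpos j : (j < N)%nat -> forall x, a <= x <= b -> gfun q mu w j x <= 0.
Proof.
  intros Hj x Hx. assert (Hw : w j > 0) by (apply core_pos; lia).
  destruct (Rle_or_lt (gfun q mu w j x) 0) as [H|H]; auto. exfalso.
  pose proof (gsign_b j Hj Hw) as Hsb.
  destruct (Req_dec x b) as [Eb|Eb].
  - subst x. destruct (N - 1 - j)%nat eqn:E.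
    + simpl in Hsb. (fixR; lra).
    + rewrite (ordge_0 _ _ _ (proj1 (gder_b j Hj))) in H. (fixR; lra). rewrite E. lia.
  - destruct (sign_b (fun x => - gfun q mu w j x) b (N - 1 - j)) as [d2 [d2p Hd2]].
    intros m y; apply ex_derive_n_opp; apply sm_gfun; auto.
    intros i Hi. rewrite Derive_n_opp, (proj1 (gder_b j Hj)); auto. (fixR; ring).
    rewrite Derive_n_opp. (fixR; lra).
    destruct (pick_pt_b d2 x d2p ltac:((fixR; lra))) as [x2 [Hx2 [Hx2' Hx2'']]].
    specialize (Hd2 x2 ltac:((fixR; lra))).
    destruct (IVT (fun y => - gfun q mu w j y) x x2) as [z [Hz1 Hz2]].
    intros y. apply continuity_pt_opp. apply sm_cont. apply sm_gfun; auto.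
    (fixR; lra). (fixR; lra). (fixR; lra).
    assert (z <> x) by (intros E; subst; (fixR; lra)). assert (z <> x2) by (intros E; subst; (fixR; lra)).
    apply (g_no_interior j Hj Hw z). (fixR; lra). (fixR; lra).
Qed.

End Core.


Lemma ceq (z w : C) : fst z = fst w -> snd z = snd w -> z = w.
Proof. destruct z, w; simpl; intros; subst; auto. Qed.

Ltac csimp := unfold CDn, Cminus, Cplus, Copp, Cmult, RtoC, Re, Im in *; simpl in *.

Lemma Csmooth_iff f : Csmooth f <-> sm (fun t => fst (f t)) /\ sm (fun t => snd (f t)).
Proof.
  split. intros H. split; intros k x; apply H.
  intros [H1 H2] k x. split; [apply H1|apply H2].
Qed.

Definition CT (nu : C) (f : R -> C) : R -> C := fun x => Cminus (CDn 1 f x) (Cmult nu (f x)).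

Lemma apply_cons nu M f : apply_ops (nu :: M) f = CT nu (apply_ops M f).
Proof. reflexivity. Qed.

Lemma fst_CT nu f x : fst (CT nu f x) = Derive (fun t => fst (f t)) x - (fst nu * fst (f x) - snd nu * snd (f x)).
Proof. unfold CT. csimp. ring. Qed.
Lemma snd_CT nu f x : snd (CT nu f x) = Derive (fun t => snd (f t)) x - (fst nu * snd (f x) + snd nu * fst (f x)).
Proof. unfold CT. csimp. ring. Qed.

Lemma Csmooth_CT nu f : Csmooth f -> Csmooth (CT nu f).
Proof.
  intros H. apply Csmooth_iff in H. destruct H as [H1 H2]. apply Csmooth_iff. split.
  - apply sm_ext with (fun x => Derive (fun t => fst (f t)) x - (fst nu * fst (f x) - snd nu * snd (f x))).
    intros; rewrite fst_CT; auto.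
    apply sm_minus. apply sm_D; auto. apply sm_minus; apply sm_scal; auto.
  - apply sm_ext with (fun x => Derive (fun t => snd (f t)) x - (fst nu * snd (f x) + snd nu * fst (f x))).
    intros; rewrite snd_CT; auto.
    apply sm_minus. apply sm_D; auto. apply sm_plus; apply sm_scal; auto.
Qed.

Lemma Csmooth_apply M f : Csmooth f -> Csmooth (apply_ops M f).
Proof. intros H. induction M; simpl; auto. apply Csmooth_CT; auto. Qed.

Lemma CDn_CT nu f j x : Csmooth f ->
  CDn j (CT nu f) x = Cminus (CDn (S j) f x) (Cmult nu (CDn j f x)).
Proof.
  intros H. apply Csmooth_iff in H. destruct H as [H1 H2].
  unfold CDn. apply ceq; simpl.
  - rewrite (Derive_n_ext _ (fun x => Derive (fun t => fst (f t)) x - (fst nu * fst (f x) - snd nu * snd (f x)))).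
    2: intros; exact (fst_CT nu f _).
    rewrite Dn_minus, Dn_D, Dn_minus, !Derive_n_scal_l.
    unfold Cminus, Cplus, Copp, Cmult, Re, Im; simpl. ring.
    1,2: apply sm_scal; auto. apply sm_D; auto. apply sm_minus; apply sm_scal; auto.
  - rewrite (Derive_n_ext _ (fun x => Derive (fun t => snd (f t)) x - (fst nu * snd (f x) + snd nu * fst (f x)))).
    2: intros; exact (snd_CT nu f _).
    rewrite Dn_minus, Dn_D, Dn_plus, !Derive_n_scal_l.
    unfold Cminus, Cplus, Copp, Cmult, Re, Im; simpl. ring.
    1,2: apply sm_scal; auto. apply sm_D; auto. apply sm_plus; apply sm_scal; auto.
Qed.

Lemma ode1 nu h a : Csmooth h -> (forall x, CT nu h x = 0) -> h a = 0 -> forall x, h x = 0.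
Proof.
  intros Hs H0 Ha x.
  apply Csmooth_iff in Hs. destruct Hs as [Hu Hv].
  set (u := fun t => fst (h t)) in *. set (v := fun t => snd (h t)) in *.
  assert (Du : forall t, Derive u t = fst nu * u t - snd nu * v t).
  { intros t. pose proof (f_equal fst (H0 t)). rewrite fst_CT in H. simpl in H. change (fst (h t)) with (u t) in H; change (snd (h t)) with (v t) in H; change (Derive (fun t0 => fst (h t0)) t) with (Derive u t) in H; change (Derive (fun t0 => snd (h t0)) t) with (Derive v t) in H. lra. }
  assert (Dv : forall t, Derive v t = fst nu * v t + snd nu * u t).
  { intros t. pose proof (f_equal snd (H0 t)). rewrite snd_CT in H. simpl in H. change (fst (h t)) with (u t) in H; change (snd (h t)) with (v t) in H; change (Derive (fun t0 => fst (h t0)) t) with (Derive u t) in H; change (Derive (fun t0 => snd (h t0)) t) with (Derive v t) in H. lra. }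
  set (phi := fun t => exp (-2 * fst nu * t) * (u t * u t + v t * v t)).
  assert (Dphi : forall t, derivable_pt_lim phi t 0).
  { intros t. apply is_derive_Reals. unfold phi.
    pose proof (Derive_correct u t (sm_exd u t Hu)) as HU.
    pose proof (Derive_correct v t (sm_exd v t Hv)) as HV.
    assert (He : is_derive (fun t => exp (-2 * fst nu * t)) t (-2 * fst nu * exp (-2 * fst nu * t))).
    { auto_derive; auto. ring. }
    pose proof (is_derive_plus _ _ t _ _ (is_derive_mult _ _ t _ _ HU HU ltac:(intros; apply Rmult_comm))
       (is_derive_mult _ _ t _ _ HV HV ltac:(intros; apply Rmult_comm))) as HS.
    pose proof (is_derive_mult _ _ t _ _ He HS ltac:(intros; apply Rmult_comm)) as HM.
    replace 0 with (plus (mult (-2 * fst nu * exp (-2 * fst nu * t)) (plus (mult (u t) (u t)) (mult (v t) (v t))))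
      (mult (exp (-2 * fst nu * t)) (plus (plus (mult (Derive u t) (u t)) (mult (u t) (Derive u t)))
        (plus (mult (Derive v t) (v t)) (mult (v t) (Derive v t)))))).
    exact HM. unfold plus, mult; simpl. rewrite Du, Dv. ring. }
  assert (Hc : phi x = phi a).
  { destruct (Rtotal_order x a) as [Hl|[He|Hl]].
    - destruct (MVT_cor2 phi (fun _ => 0) x a Hl) as [c [Hc _]]. intros; apply Dphi. lra.
    - subst; auto.
    - destruct (MVT_cor2 phi (fun _ => 0) a x Hl) as [c [Hc _]]. intros; apply Dphi. lra. }
  assert (phi a = 0). { unfold phi, u, v. rewrite Ha. simpl. ring. }
  rewrite H in Hc. unfold phi in Hc.
  pose proof (exp_pos (-2 * fst nu * x)).
  assert (u x * u x + v x * v x = 0).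
  { apply Rmult_eq_reg_l with (exp (-2 * fst nu * x)). lra. lra. }
  assert (u x = 0) by nra. assert (v x = 0) by nra.
  apply ceq; simpl; auto.
Qed.


Lemma CDn0 f x : CDn 0 f x = f x.
Proof. unfold CDn. apply ceq; reflexivity. Qed.

Lemma C1 a M : forall f j, Csmooth f -> (forall i, (i <= j + length M)%nat -> CDn i f a = 0) ->
  CDn j (apply_ops M f) a = 0.
Proof.
  induction M as [|nu M IH]; intros f j Hs H.
  - simpl. apply H. simpl; lia.
  - rewrite apply_cons, CDn_CT by (apply Csmooth_apply; auto).
    rewrite (IH f (S j)), (IH f j); auto.
    apply ceq; csimp; ring.
    intros; apply H; simpl; lia. intros; apply H; simpl; lia.
Qed.

Lemma ode a M : forall f, Csmooth f -> (forall x, apply_ops M f x = 0) ->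
  (forall i, (i < length M)%nat -> CDn i f a = 0) -> forall x, f x = 0.
Proof.
  induction M as [|nu M IH]; intros f Hs H0 Hi x.
  - apply H0.
  - apply IH; auto. 2: intros; apply Hi; simpl; lia.
    apply (ode1 nu (apply_ops M f) a). apply Csmooth_apply; auto.
    intros; rewrite <- apply_cons; auto.
    rewrite <- CDn0. apply C1; auto. intros; apply Hi. simpl; lia.
Qed.

Lemma Csmooth_plus f g : Csmooth f -> Csmooth g -> Csmooth (fun y => Cplus (f y) (g y)).
Proof.
  intros Hf Hg. apply Csmooth_iff in Hf, Hg. apply Csmooth_iff. simpl.
  destruct Hf, Hg; split; apply sm_plus; auto.
Qed.

Lemma Csmooth_scal c f : Csmooth f -> Csmooth (fun y => Cmult c (f y)).
Proof.
  intros Hf. apply Csmooth_iff in Hf. apply Csmooth_iff. simpl.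
  destruct Hf; split. apply sm_minus; apply sm_scal; auto. apply sm_plus; apply sm_scal; auto.
Qed.

Lemma Csmooth_Csum (F : nat -> R -> C) m : (forall k, Csmooth (F k)) -> Csmooth (fun y => Csum (fun k => F k y) m).
Proof.
  intros H. induction m; simpl; auto. apply Csmooth_plus; auto.
Qed.

Lemma CT_plus nu f g x : Csmooth f -> Csmooth g ->
  CT nu (fun y => Cplus (f y) (g y)) x = Cplus (CT nu f x) (CT nu g x).
Proof.
  intros Hf Hg. apply Csmooth_iff in Hf, Hg. destruct Hf, Hg.
  apply ceq.
  - rewrite fst_CT. cbn [fst snd Cplus Cmult Cminus Copp RtoC]. rewrite !fst_CT.
    try (rewrite (Derive_ext _ (fun t => fst (f t) + fst (g t))) by reflexivity).
    rewrite Derive_plus by (apply sm_exd; auto). ring.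
  - rewrite snd_CT. cbn [fst snd Cplus Cmult Cminus Copp RtoC]. rewrite !snd_CT.
    try (rewrite (Derive_ext _ (fun t => snd (f t) + snd (g t))) by reflexivity).
    rewrite Derive_plus by (apply sm_exd; auto). ring.
Qed.

Lemma CT_scal nu c f x : Csmooth f ->
  CT nu (fun y => Cmult c (f y)) x = Cmult c (CT nu f x).
Proof.
  intros Hf. apply Csmooth_iff in Hf. destruct Hf.
  apply ceq.
  - rewrite fst_CT. cbn [fst snd Cplus Cmult Cminus Copp RtoC]. rewrite fst_CT, snd_CT.
    try (rewrite (Derive_ext _ (fun t => fst c * fst (f t) - snd c * snd (f t))) by reflexivity).
    rewrite Derive_minus, !Derive_scal. ring.
    1,2: apply sm_exd; apply sm_scal; auto.
  - rewrite snd_CT. cbn [fst snd Cplus Cmult Cminus Copp RtoC]. rewrite fst_CT, snd_CT.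
    try (rewrite (Derive_ext _ (fun t => fst c * snd (f t) + snd c * fst (f t))) by reflexivity).
    rewrite Derive_plus, !Derive_scal. ring.
    1,2: apply sm_exd; apply sm_scal; auto.
Qed.

Lemma apply_plus M f g : Csmooth f -> Csmooth g ->
  apply_ops M (fun y => Cplus (f y) (g y)) = fun y => Cplus (apply_ops M f y) (apply_ops M g y).
Proof.
  intros Hf Hg. induction M as [|nu M IH]; [reflexivity|].
  rewrite !apply_cons, IH. apply functional_extensionality; intros x.
  apply CT_plus; apply Csmooth_apply; auto.
Qed.

Lemma apply_scal M c f : Csmooth f ->
  apply_ops M (fun y => Cmult c (f y)) = fun y => Cmult c (apply_ops M f y).
Proof.
  intros Hf. induction M as [|nu M IH]; [reflexivity|].
  rewrite !apply_cons, IH. apply functional_extensionality; intros x.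
  apply CT_scal; apply Csmooth_apply; auto.
Qed.

Lemma apply_Csum M (F : nat -> R -> C) (c : nat -> C) m : (forall k, Csmooth (F k)) ->
  apply_ops M (fun y => Csum (fun k => Cmult (c k) (F k y)) m) =
  fun y => Csum (fun k => Cmult (c k) (apply_ops M (F k) y)) m.
Proof.
  intros H. induction m; simpl.
  - apply apply_scal; auto.
  - rewrite apply_plus. rewrite IHm, apply_scal; auto.
    apply Csmooth_Csum. intros; apply Csmooth_scal; auto. apply Csmooth_scal; auto.
Qed.

Lemma Derive_fstCT mu f x : Csmooth f ->
  Derive (fun t => fst (CT mu f t)) x =
  Derive (Derive (fun t => fst (f t))) x - (fst mu * Derive (fun t => fst (f t)) x - snd mu * Derive (fun t => snd (f t)) x).
Proof.
  intros Hf. apply Csmooth_iff in Hf. destruct Hf.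
  rewrite (Derive_ext _ (fun t => Derive (fun t => fst (f t)) t - (fst mu * fst (f t) - snd mu * snd (f t)))).
  2: intros; apply fst_CT.
  rewrite Derive_minus, Derive_minus, !Derive_scal; auto.
  1,2: apply sm_exd; apply sm_scal; auto. apply sm_exd; apply sm_D; auto.
  apply sm_exd; apply sm_minus; apply sm_scal; auto.
Qed.

Lemma Derive_sndCT mu f x : Csmooth f ->
  Derive (fun t => snd (CT mu f t)) x =
  Derive (Derive (fun t => snd (f t))) x - (fst mu * Derive (fun t => snd (f t)) x + snd mu * Derive (fun t => fst (f t)) x).
Proof.
  intros Hf. apply Csmooth_iff in Hf. destruct Hf.
  rewrite (Derive_ext _ (fun t => Derive (fun t => snd (f t)) t - (fst mu * snd (f t) + snd mu * fst (f t)))).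
  2: intros; apply snd_CT.
  rewrite Derive_minus, Derive_plus, !Derive_scal; auto.
  1,2: apply sm_exd; apply sm_scal; auto. apply sm_exd; apply sm_D; auto.
  apply sm_exd; apply sm_plus; apply sm_scal; auto.
Qed.

Lemma CT_comm nu mu f x : Csmooth f -> CT nu (CT mu f) x = CT mu (CT nu f) x.
Proof.
  intros Hf. apply ceq.
  - rewrite !fst_CT, !snd_CT. rewrite ?Derive_fstCT, ?Derive_sndCT by auto. ring.
  - rewrite !snd_CT, !fst_CT. rewrite ?Derive_sndCT, ?Derive_fstCT by auto. ring.
Qed.

Lemma apply_CT M nu f : Csmooth f -> apply_ops M (CT nu f) = CT nu (apply_ops M f).
Proof.
  intros Hf. induction M as [|mu M IH]; [reflexivity|].
  rewrite !apply_cons, IH. apply functional_extensionality; intros x.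
  apply CT_comm. apply Csmooth_apply; auto.
Qed.

Definition Eexp (mu : R) : R -> C := fun y => RtoC (exp (mu * y)).

Lemma Csmooth_E mu : Csmooth (Eexp mu).
Proof. apply Csmooth_iff. unfold Eexp, RtoC; simpl. split. apply sm_exp. apply sm_const. Qed.

Lemma CT_E nu mu c x : CT nu (fun y => Cmult c (Eexp mu y)) x = Cmult (Cmult c (Cminus (RtoC mu) nu)) (Eexp mu x).
Proof.
  assert (D1 : forall k, Derive (fun t => k * exp (mu * t)) x = k * mu * exp (mu * x)).
  { intros k. apply is_derive_unique. auto_derive; auto. ring. }
  apply ceq.
  - rewrite fst_CT. unfold Eexp. cbn [fst snd Cplus Cmult Cminus Copp RtoC].
    rewrite (Derive_ext _ (fun t => (fst c) * exp (mu * t))) by (intros; simpl; ring).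
    rewrite D1. ring.
  - rewrite snd_CT. unfold Eexp. cbn [fst snd Cplus Cmult Cminus Copp RtoC].
    rewrite (Derive_ext _ (fun t => (snd c) * exp (mu * t))) by (intros; simpl; ring).
    rewrite D1. ring.
Qed.

Fixpoint Kf (mu : R) (c : C) (M : list C) : C :=
  match M with nil => c | nu :: M' => Cmult (Kf mu c M') (Cminus (RtoC mu) nu) end.

Lemma apply_E M mu c : apply_ops M (fun y => Cmult c (Eexp mu y)) = fun y => Cmult (Kf mu c M) (Eexp mu y).
Proof.
  induction M as [|nu M IH]; [reflexivity|].
  rewrite !apply_cons, IH. apply functional_extensionality; intros x. apply CT_E.
Qed.


Lemma sum_lin (u v : nat -> R) (al be : R) m :
  sum_n (fun k => al * u k + be * v k) m = al * sum_n u m + be * sum_n v m.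
Proof. induction m. rewrite !sum_O; auto. rewrite !sumS, IHm. (fixR; (fixR; ring)). Qed.

Lemma sum_ext (u v : nat -> R) m : (forall k, (k <= m)%nat -> u k = v k) -> sum_n u m = sum_n v m.
Proof. intros H. apply sum_n_ext_loc. auto. Qed.

Lemma sum_single (F : nat -> R) k m : (k <= m)%nat -> (forall i, (i <= m)%nat -> i <> k -> F i = 0) -> sum_n F m = F k.
Proof.
  revert k. induction m; intros k Hk H.
  - rewrite sum_O. assert (k = 0%nat) by lia. subst; auto.
  - destruct (Nat.eq_dec k (S m)).
    + subst. apply sum_last. intros; apply H; lia.
    + rewrite sumS, (IHm k) by (lia || (intros; apply H; lia)). rewrite (H (S m)) by lia. (fixR; (fixR; ring)).
Qed.

Lemma sum_pad (F : nat -> R) j m : (j <= m)%nat ->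
  sum_n F j = sum_n (fun k => if Nat.leb k j then F k else 0) m.
Proof.
  intros H. rewrite (sum_split _ j m H). rewrite tail_zero.
  rewrite Rplus_0_r. apply sum_ext. intros k Hk. destruct (Nat.leb_spec k j); auto; lia.
  intros k Hk. destruct (Nat.leb_spec k j); auto; lia.
Qed.

Lemma fst_Csum (F : nat -> C) m : fst (Csum F m) = sum_n (fun k => fst (F k)) m.
Proof. induction m; simpl. rewrite sum_O; auto. rewrite sumS, <- IHm. reflexivity. Qed.
Lemma snd_Csum (F : nat -> C) m : snd (Csum F m) = sum_n (fun k => snd (F k)) m.
Proof. induction m; simpl. rewrite sum_O; auto. rewrite sumS, <- IHm. reflexivity. Qed.

Lemma fst_scalR r z : fst (Cmult (RtoC r) z) = r * fst z.
Proof. csimp. (fixR; (fixR; ring)). Qed.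
Lemma snd_scalR r z : snd (Cmult (RtoC r) z) = r * snd z.
Proof. csimp. (fixR; (fixR; ring)). Qed.

Lemma T_sum mu (h : nat -> R -> R) (w : nat -> R) j x : (forall k, sm (h k)) ->
  T mu (fun y => sum_n (fun k => w k * h k y) j) x = sum_n (fun k => w k * T mu (h k) x) j.
Proof.
  intros Hs. unfold T.
  change (Derive (fun y => sum_n (fun k => w k * h k y) j) x) with
     (Derive_n (fun y => sum_n (fun k => w k * h k y) j) 1 x).
  rewrite Dn_sum. 2: intros; apply sm_scal; auto.
  rewrite (sum_ext (fun k => w k * (Derive (h k) x - mu * h k x)) (fun k => 1 * Derive_n (fun y => w k * h k y) 1 x + (- mu) * (w k * h k x))).
  rewrite sum_lin. (fixR; (fixR; ring)).
  intros k _. simpl. rewrite Derive_scal. (fixR; (fixR; ring)).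
Qed.

Lemma T_zero mu u a b : a < b -> sm u -> (forall x, a <= x <= b -> u x = 0) -> forall x, a <= x <= b -> T mu u x = 0.
Proof.
  intros Hab Hs H x Hx. unfold T. rewrite H by auto.
  rewrite (zE0 u a b x Hab Hx (sm_exd u x Hs) H). (fixR; ring).
Qed.

Lemma Derive_E mu x : Derive (fun y => exp (mu * y)) x = mu * exp (mu * x).
Proof. apply is_derive_unique. auto_derive; auto. (fixR; (fixR; ring)). Qed.

Lemma cfg_ext a b G H K : (forall x, G x = H x) -> cfg_bound a b G K -> cfg_bound a b H K.
Proof.
  intros E HG [x [Hx Hn]] al be zs Ha Hb Hc Hz. apply HG; auto.
  exists x; rewrite E; auto.
  intros i Hi; rewrite (Derive_n_ext G H) by auto; apply Ha; auto.
  intros i Hi; rewrite (Derive_n_ext G H) by auto; apply Hb; auto.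
  intros z Hz'; rewrite E; auto.
Qed.

Lemma cfg_rolle0 mu a b G : a < b -> sm G -> (forall x, a <= x <= b -> T mu G x = 0) -> cfg_bound a b G 0.
Proof.
  intros Hab Hs HT Hnz al be zs Ha Hb Hc Hz.
  assert (Hga : G a <> 0).
  { intros E. destruct Hnz as [x [Hx Hgx]]. apply Hgx.
    pose proof (constT mu G a b Hs ltac:((fixR; lra)) HT x Hx). rewrite E in H.
    assert (exp (- mu * x) > 0) by apply exp_pos. (fixR; (fixR; nra)). }
  assert (Hall : forall x, a <= x <= b -> G x <> 0).
  { intros x Hx E. pose proof (constT mu G a b Hs ltac:((fixR; lra)) HT x Hx). rewrite E in H.
    assert (exp (- mu * a) > 0) by apply exp_pos.
    assert (exp (- mu * a) * G a <> 0) by (apply Rmult_integral_contrapositive; (fixR; lra)). (fixR; (fixR; lra)). }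
  destruct al. 2:{ exfalso. apply (Hall a). (fixR; (fixR; lra)). apply (ordge_0 _ _ _ Ha). lia. }
  destruct be. 2:{ exfalso. apply (Hall b). (fixR; (fixR; lra)). apply (ordge_0 _ _ _ Hb). lia. }
  destruct zs as [|z zs]. simpl; lia.
  exfalso. pose proof (chain_in _ _ _ z Hc (or_introl eq_refl)).
  apply (Hall z). (fixR; (fixR; lra)). apply Hz. left; auto.
Qed.

Lemma Csum_zero (F : nat -> C) m : (forall k, F k = 0) -> Csum F m = 0.
Proof. intros H. induction m; simpl. auto. rewrite IHm, H. apply ceq; csimp; ring. Qed.

Lemma apply_zero M x : apply_ops M (fun _ => RtoC 0) x = 0.
Proof.
  revert x. induction M as [|nu M IH]; intros x. reflexivity.
  rewrite apply_cons. apply ceq.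
  - rewrite fst_CT, (Derive_ext _ (fun _ => 0)) by (intros; rewrite IH; reflexivity).
    rewrite Derive_const, IH. csimp; ring.
  - rewrite snd_CT, (Derive_ext _ (fun _ => 0)) by (intros; rewrite IH; reflexivity).
    rewrite Derive_const, IH. csimp; ring.
Qed.

Lemma sum_neg (u : nat -> R) m : sum_n (fun k => - u k) m = - sum_n u m.
Proof. induction m. rewrite !sum_O; auto. rewrite !sumS, IHm. fixR; ring. Qed.

Lemma sum_minus (u v : nat -> R) m : sum_n (fun k => u k - v k) m = sum_n u m - sum_n v m.
Proof. induction m. rewrite !sum_O; auto. rewrite !sumS, IHm. fixR; ring. Qed.

Lemma sum_scal (u : nat -> R) al m : sum_n (fun k => al * u k) m = al * sum_n u m.
Proof. induction m. rewrite !sum_O; auto. rewrite !sumS, IHm. fixR; ring. Qed.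


Section Main.
Variables (a b lam0 lam1 : R) (lams : list C) (p : nat -> R -> C) (n : nat).
Hypothesis Hn : n = S (length lams).
Hypothesis Hab : a < b.
Hypothesis Hlam : lam0 < lam1.
Hypothesis HECT : ExtChebyshev (length lams - 1) (ExpPoly lams) a b.
Hypothesis HB : BernsteinBasis n (ExpPoly (RtoC lam0 :: RtoC lam1 :: lams)) a b p.
Hypothesis Hreal : forall k x, (k <= n)%nat -> a <= x <= b -> Im (p k x) = 0 /\ 0 <= Re (p k x).

Definition Lops := RtoC lam0 :: RtoC lam1 :: lams.
Definition pq (k : nat) : R -> C := if Nat.leb k n then p k else (fun _ => RtoC 0).
Definition P (k : nat) : R -> R := fun x => fst (pq k x).
Definition Q (k : nat) : R -> R := fun x => snd (pq k x).

Lemma pq_le k : (k <= n)%nat -> pq k = p k.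
Proof. intros H. unfold pq. destruct (Nat.leb_spec k n); auto; lia. Qed.
Lemma pq_gt k : (n < k)%nat -> pq k = fun _ => RtoC 0.
Proof. intros H. unfold pq. destruct (Nat.leb_spec k n); auto; lia. Qed.

Lemma pq_smooth k : Csmooth (pq k).
Proof.
  destruct (Compare_dec.le_lt_dec k n).
  - rewrite pq_le by auto. destruct (HB k l) as [[H _] _]. auto.
  - rewrite pq_gt by auto. apply Csmooth_iff; simpl; split; apply sm_const.
Qed.

Lemma pq_ode k x : apply_ops Lops (pq k) x = 0.
Proof.
  destruct (Compare_dec.le_lt_dec k n).
  - rewrite pq_le by auto. destruct (HB k l) as [[_ H] _]. apply H.
  - rewrite pq_gt by auto. apply apply_zero.
Qed.

Lemma sm_P k : sm (P k).
Proof. pose proof (pq_smooth k). apply Csmooth_iff in H. apply H. Qed.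
Lemma sm_Q k : sm (Q k).
Proof. pose proof (pq_smooth k). apply Csmooth_iff in H. apply H. Qed.

Lemma Q_zero k x : a <= x <= b -> Q k x = 0.
Proof.
  intros Hx. unfold Q. destruct (Compare_dec.le_lt_dec k n).
  - rewrite pq_le by auto. apply (Hreal k x l Hx).
  - rewrite pq_gt by auto. reflexivity.
Qed.

Lemma P_nn k x : a <= x <= b -> 0 <= P k x.
Proof.
  intros Hx. unfold P. destruct (Compare_dec.le_lt_dec k n).
  - rewrite pq_le by auto. apply (Hreal k x l Hx).
  - rewrite pq_gt by auto. simpl; lra.
Qed.

Lemma DnQ k i x : a <= x <= b -> Derive_n (Q k) i x = 0.
Proof. intros Hx. apply (zE1 _ a b Hab (sm_Q k)); auto. intros; apply Q_zero; auto. Qed.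

Lemma P_ord k c m : (k <= n)%nat -> a <= c <= b -> zero_order_exact (p k) c m ->
  ordge (P k) c m /\ Derive_n (P k) m c <> 0.
Proof.
  intros Hk Hc [H1 H2]. unfold P. rewrite pq_le by auto. split.
  - intros i Hi. pose proof (f_equal fst (H1 i Hi)). exact H.
  - intros E. apply H2. unfold CDn. apply ceq. exact E.
    simpl. pose proof (DnQ k m c Hc). unfold Q in H. rewrite pq_le in H by auto. exact H.
Qed.

Lemma P_ord_a k : (k <= n)%nat -> ordge (P k) a k /\ Derive_n (P k) k a <> 0.
Proof. intros Hk. apply P_ord; auto. lra. apply (HB k Hk). Qed.
Lemma P_ord_b k : (k <= n)%nat -> ordge (P k) b (n - k) /\ Derive_n (P k) (n - k) b <> 0.
Proof. intros Hk. apply P_ord; auto. lra. apply (HB k Hk). Qed.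


Lemma coef_exist mu : forall m, (m <= n)%nat -> exists c : nat -> R, forall i, (i <= m)%nat ->
  mu ^ i * exp (mu * a) = sum_n (fun k => c k * Derive_n (P k) i a) m.
Proof.
  induction m; intros Hm.
  - destruct (P_ord_a 0 ltac:(lia)) as [_ H0].
    exists (fun _ => exp (mu * a) / Derive_n (P 0) 0 a). intros i Hi.
    assert (i = 0%nat) by lia. subst. rewrite sum_O. simpl. simpl in H0. field. auto.
  - destruct (IHm ltac:(lia)) as [c Hc].
    destruct (P_ord_a (S m) Hm) as [Hz H0].
    set (d := (mu ^ (S m) * exp (mu * a) - sum_n (fun k => c k * Derive_n (P k) (S m) a) m) / Derive_n (P (S m)) (S m) a).
    exists (fun k => if Nat.eqb k (S m) then d else c k). intros i Hi.
    rewrite sumS. rewrite Nat.eqb_refl.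
    rewrite (sum_ext _ (fun k => c k * Derive_n (P k) i a)).
    2:{ intros k Hk. destruct (Nat.eqb_spec k (S m)); auto; lia. }
    destruct (Nat.eq_dec i (S m)).
    + subst i. unfold d. fixR. field. auto.
    + rewrite (Hz i) by lia. rewrite <- Hc by lia. fixR; ring.
Qed.

Lemma span mu : (mu = lam0 \/ mu = lam1) -> exists c : nat -> R, forall x, exp (mu * x) = sum_n (fun k => c k * P k x) n.
Proof.
  intros Hmu. destruct (coef_exist mu n (le_n n)) as [c Hc].
  set (G := fun y => Cplus (Cmult (RtoC 1) (Eexp mu y)) (Csum (fun k => Cmult (RtoC (- c k)) (pq k y)) n)).
  assert (HGs : Csmooth G).
  { apply Csmooth_plus. apply Csmooth_scal, Csmooth_E. apply Csmooth_Csum. intros; apply Csmooth_scal, pq_smooth. }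
  assert (Gfst : forall t, fst (G t) = exp (mu * t) - sum_n (fun k => c k * P k t) n).
  { intros t. unfold G. cbn [fst Cplus]. rewrite fst_scalR, fst_Csum.
    rewrite (sum_ext _ (fun k => - (c k * P k t))). rewrite sum_neg. unfold Eexp, RtoC; simpl. fixR; ring.
    intros k _. rewrite fst_scalR. unfold P. fixR; ring. }
  assert (Gsnd : forall t, a <= t <= b -> snd (G t) = 0).
  { intros t Ht. unfold G. cbn [snd Cplus]. rewrite snd_scalR, snd_Csum.
    rewrite sum_zero. unfold Eexp, RtoC; simpl. fixR; ring.
    intros k _. rewrite snd_scalR. pose proof (Q_zero k t Ht). unfold Q in H. rewrite H. ring. }
  assert (Hode : forall x, apply_ops Lops G x = 0).
  { intros x. unfold G. rewrite apply_plus, apply_E, apply_Csum.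
    2: intros; apply pq_smooth. 2: apply Csmooth_scal, Csmooth_E.
    2: apply Csmooth_Csum; intros; apply Csmooth_scal, pq_smooth.
    rewrite Csum_zero. 2:{ intros k. rewrite pq_ode. apply ceq; csimp; ring. }
    unfold Lops. simpl Kf. apply ceq; destruct Hmu; subst; unfold Eexp; csimp; ring. }
  assert (HG0 : forall x, G x = 0).
  { apply (ode a Lops G HGs Hode). intros i Hi. unfold CDn. apply ceq.
    - simpl. rewrite (Derive_n_ext _ (fun t => exp (mu * t) - sum_n (fun k => c k * P k t) n)) by (intros; apply Gfst).
      rewrite Dn_minus, Dn_exp, Dn_sum, (Hc i).
      rewrite (sum_ext (fun k => Derive_n (fun x => c k * P k x) i a) (fun k => c k * Derive_n (P k) i a)). fixR; ring.
      intros; apply Derive_n_scal_l.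
      unfold Lops in Hi; simpl in Hi; lia.
      intros; apply sm_scal, sm_P. apply sm_exp. apply sm_sum; intros; apply sm_scal, sm_P.
    - simpl. apply (zE1 (fun t => snd (G t)) a b Hab). apply Csmooth_iff in HGs; apply HGs.
      exact Gsnd. lra. }
  exists c. intros x. pose proof (f_equal fst (HG0 x)). rewrite Gfst in H. simpl in H. lra.
Qed.


Definition SS (i : nat) : R -> R := T lam1 (T lam0 (P i)).

Lemma sm_SS i : sm (SS i).
Proof. unfold SS. apply sm_T, sm_T, sm_P. Qed.

Lemma fun_fst_CTR mu f : (fun t => fst (CT (RtoC mu) f t)) = T mu (fun t => fst (f t)).
Proof. apply functional_extensionality; intros t. rewrite fst_CT. unfold T. csimp. ring. Qed.
Lemma fun_snd_CTR mu f : (fun t => snd (CT (RtoC mu) f t)) = T mu (fun t => snd (f t)).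
Proof. apply functional_extensionality; intros t. rewrite snd_CT. unfold T. csimp. ring. Qed.

Lemma fold_ones (zs : list R) : fold_right (fun z s => (snd z + s)%nat) 0%nat (map (fun z => (z, 1%nat)) zs) = length zs.
Proof. induction zs; simpl; auto. Qed.

Lemma ECT_L (gam : nat -> R) : cfg_bound a b (fun x => sum_n (fun i => gam i * SS i x) n) (n - 2).
Proof.
  intros Hnz al be zs Ha Hb Hc Hz.
  set (Fc := fun y => Csum (fun i => Cmult (RtoC (gam i)) (CT (RtoC lam1) (CT (RtoC lam0) (pq i)) y)) n).
  assert (Fc_fst : forall x, fst (Fc x) = sum_n (fun i => gam i * SS i x) n).
  { intros x. unfold Fc. rewrite fst_Csum. apply sum_ext. intros k _.
    rewrite fst_scalR. f_equal.
    change (fst (CT (RtoC lam1) (CT (RtoC lam0) (pq k)) x)) with ((fun t => fst (CT (RtoC lam1) (CT (RtoC lam0) (pq k)) t)) x).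
    rewrite fun_fst_CTR, fun_fst_CTR. reflexivity. }
  assert (Fc_snd : forall x, a <= x <= b -> snd (Fc x) = 0).
  { intros x Hx. unfold Fc. rewrite snd_Csum. apply sum_zero. intros k _.
    rewrite snd_scalR.
    change (snd (CT (RtoC lam1) (CT (RtoC lam0) (pq k)) x)) with ((fun t => snd (CT (RtoC lam1) (CT (RtoC lam0) (pq k)) t)) x).
    rewrite fun_snd_CTR, fun_snd_CTR.
    change (fun t => snd (pq k t)) with (Q k).
    rewrite (T_zero lam1 (T lam0 (Q k)) a b Hab); auto. ring.
    apply sm_T, sm_Q. apply T_zero; auto. apply sm_Q. intros; apply Q_zero; auto. }
  assert (HsC : forall i, Csmooth (CT (RtoC lam1) (CT (RtoC lam0) (pq i)))).
  { intros; apply Csmooth_CT, Csmooth_CT, pq_smooth. }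
  assert (HFs : Csmooth Fc).
  { unfold Fc. apply Csmooth_Csum. intros; apply Csmooth_scal; auto. }
  assert (HE : ExpPoly lams Fc).
  { split; auto. intros x. unfold Fc. rewrite apply_Csum by auto.
    apply Csum_zero. intros k.
    rewrite apply_CT by (apply Csmooth_CT, pq_smooth).
    rewrite apply_CT by (apply pq_smooth).
    rewrite CT_comm by (apply Csmooth_apply, pq_smooth).
    change (CT (RtoC lam0) (CT (RtoC lam1) (apply_ops lams (pq k))) x) with (apply_ops Lops (pq k) x).
    rewrite pq_ode. apply ceq; csimp; ring. }
  assert (HnzC : exists x, a <= x <= b /\ Fc x <> RtoC 0).
  { destruct Hnz as [x [Hx Hne]]. exists x; split; auto. intros E. apply Hne.
    rewrite <- Fc_fst, E. reflexivity. }
  assert (Hzo : forall c m, a <= c <= b -> ordge (fun x => sum_n (fun i => gam i * SS i x) n) c m ->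
      zero_order_ge Fc c m).
  { intros c m Hc' Ho j Hj. unfold CDn. apply ceq.
    - simpl. rewrite (Derive_n_ext _ (fun x => sum_n (fun i => gam i * SS i x) n)) by (intros; apply Fc_fst).
      apply Ho; auto.
    - simpl. apply (zE1 (fun t => snd (Fc t)) a b Hab); auto. apply Csmooth_iff in HFs; apply HFs. }
  pose proof (HECT Fc HE HnzC ((a, al) :: (b, be) :: map (fun z => (z, 1%nat)) zs)) as HH.
  simpl in HH. rewrite fold_ones in HH.
  assert (Hlen : (length lams - 1 = n - 2)%nat) by lia. rewrite Hlen in HH.
  assert (Hin : forall z, In z zs -> a < z < b) by (intros; eapply chain_in; eauto).
  cut (al + (be + length zs) <= n - 2)%nat. lia. apply HH.
  - rewrite map_map. simpl. rewrite map_id. constructor.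
    + intros [E|E]. lra. apply Hin in E. lra.
    + constructor. intros E. apply Hin in E. lra. eapply chain_nodup; eauto.
  - intros z [E|[E|E]].
    + subst z. simpl. split. lra. apply Hzo; auto. lra.
    + subst z. simpl. split. lra. apply Hzo; auto. lra.
    + apply in_map_iff in E. destruct E as [y [E Hy]]. subst z. simpl.
      pose proof (Hin y Hy). split. lra. apply Hzo. lra.
      intros i Hi. assert (i = 0%nat) by lia. subst. simpl. apply Hz; auto.
Qed.


Definition inspan (G : R -> R) := exists gam : nat -> R, forall x, G x = sum_n (fun i => gam i * SS i x) n.

Lemma cfg_inspan G : inspan G -> cfg_bound a b G (n - 2).
Proof.
  intros [gam H]. apply cfg_ext with (fun x => sum_n (fun i => gam i * SS i x) n).
  intros; symmetry; auto. apply ECT_L.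
Qed.

Lemma inspan_pad (be : nat -> R) j : (j <= n)%nat -> inspan (fun x => sum_n (fun i => be i * SS i x) j).
Proof.
  intros Hj. exists (fun i => if Nat.leb i j then be i else 0). intros x.
  rewrite (sum_pad _ j n Hj). apply sum_ext. intros k _. destruct (Nat.leb k j); ring.
Qed.

Lemma inspan_comb (F : nat -> R -> R) (w : nat -> R) m : (forall k, (k <= m)%nat -> inspan (F k)) ->
  inspan (fun x => sum_n (fun k => w k * F k x) m).
Proof.
  induction m; intros H.
  - destruct (H 0%nat (le_n 0)) as [gam Hg]. exists (fun i => w 0%nat * gam i). intros x.
    rewrite sum_O, Hg. rewrite <- sum_scal. apply sum_ext; intros; ring.
  - destruct IHm as [g1 H1]. intros; apply H; lia.
    destruct (H (Datatypes.S m) (le_n _)) as [g2 H2].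
    exists (fun i => 1 * g1 i + w (Datatypes.S m) * g2 i). intros x.
    rewrite sumS, H1, H2.
    rewrite (sum_ext (fun i => (1 * g1 i + w (Datatypes.S m) * g2 i) * SS i x) (fun i => 1 * (g1 i * SS i x) + w (Datatypes.S m) * (g2 i * SS i x))).
    rewrite sum_lin. fixR; ring. intros; ring.
Qed.

Lemma SS_fst k x : fst (CT (RtoC lam1) (CT (RtoC lam0) (pq k)) x) = SS k x.
Proof.
  change (fst (CT (RtoC lam1) (CT (RtoC lam0) (pq k)) x)) with ((fun t => fst (CT (RtoC lam1) (CT (RtoC lam0) (pq k)) t)) x).
  rewrite fun_fst_CTR, fun_fst_CTR. reflexivity.
Qed.

Lemma CC_ode k x : apply_ops lams (CT (RtoC lam1) (CT (RtoC lam0) (pq k))) x = 0.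
Proof.
  rewrite apply_CT by (apply Csmooth_CT, pq_smooth).
  rewrite apply_CT by (apply pq_smooth).
  rewrite CT_comm by (apply Csmooth_apply, pq_smooth).
  change (CT (RtoC lam0) (CT (RtoC lam1) (apply_ops lams (pq k))) x) with (apply_ops Lops (pq k) x).
  apply pq_ode.
Qed.

Lemma SS_nil k x : lams = nil -> SS k x = 0.
Proof.
  intros E. rewrite <- SS_fst. pose proof (CC_ode k x). rewrite E in H. simpl in H. rewrite H. reflexivity.
Qed.

Lemma sm_TP k : sm (T lam0 (P k)).
Proof. apply sm_T, sm_P. Qed.

Lemma cfg_level1 (c : nat -> R) j : (j <= n)%nat -> cfg_bound a b (gfun P lam0 c j) (n - 1).
Proof.
  intros Hj.
  assert (HT : forall x, T lam1 (gfun P lam0 c j) x = sum_n (fun k => c k * SS k x) j).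
  { intros x. unfold gfun. rewrite T_sum. reflexivity. intros; apply sm_TP. }
  destruct (Nat.eq_dec (length lams) 0) as [El|El].
  - apply length_zero_iff_nil in El.
    replace (n - 1)%nat with 0%nat by (rewrite Hn, El; simpl; lia).
    apply (cfg_rolle0 lam1). auto. apply sm_gfun. apply sm_P.
    intros x _. rewrite HT. apply sum_zero. intros k _. rewrite SS_nil; auto. ring.
  - replace (n - 1)%nat with (Datatypes.S (n - 2)) by lia.
    apply (cfg_rolle lam1). auto. apply sm_gfun. apply sm_P.
    apply cfg_ext with (fun x => sum_n (fun k => c k * SS k x) j). intros; symmetry; auto.
    apply cfg_inspan. apply inspan_pad; auto.
Qed.


Section L.
Variables (c0 c1 : nat -> R).
Hypothesis Hc0 : forall x, exp (lam0 * x) = sum_n (fun k => c0 k * P k x) n.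
Hypothesis Hc1 : forall x, exp (lam1 * x) = sum_n (fun k => c1 k * P k x) n.

Lemma Hnn1 : forall k x, (k <= n)%nat -> a <= x <= b -> 0 <= P k x.
Proof. intros; apply P_nn; auto. Qed.
Lemma Hexp1 : forall x, a <= x <= b -> exp (lam0 * x) = sum_n (fun k => c0 k * P k x) n.
Proof. intros; apply Hc0. Qed.
Lemma Hcfg1 : forall j, (j < n)%nat -> cfg_bound a b (gfun P lam0 c0 j) (n - 1).
Proof. intros; apply cfg_level1; lia. Qed.

Lemma c0_pos : forall k, (k <= n)%nat -> c0 k > 0.
Proof. exact (core_pos a b n P lam0 c0 Hab sm_P Hnn1 P_ord_a P_ord_b Hexp1 Hcfg1). Qed.

Lemma g_np : forall j, (j < n)%nat -> forall x, a <= x <= b -> gfun P lam0 c0 j x <= 0.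
Proof. exact (g_nonpos a b n P lam0 c0 Hab sm_P Hnn1 P_ord_a P_ord_b Hexp1 Hcfg1). Qed.

Definition q2 (j : nat) : R -> R := gfun P lam0 (fun i => - c0 i) j.
Definition r (k : nat) : R := c1 k / c0 k.
Definition w2 (j : nat) : R := (r (Datatypes.S j) - r j) / (lam1 - lam0).

Lemma q2_neg j x : q2 j x = - gfun P lam0 c0 j x.
Proof.
  unfold q2, gfun. rewrite <- sum_neg. apply sum_ext. intros; ring.
Qed.

Lemma sm_q2 j : sm (q2 j).
Proof. apply sm_gfun, sm_P. Qed.

Lemma Hnn2 : forall k x, (k <= n - 1)%nat -> a <= x <= b -> 0 <= q2 k x.
Proof. intros k x Hk Hx. rewrite q2_neg. pose proof (g_np k ltac:(lia) x Hx). lra. Qed.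

Lemma Dn_q2 j i x : Derive_n (q2 j) i x = - Derive_n (gfun P lam0 c0 j) i x.
Proof. rewrite (Derive_n_ext _ (fun y => - gfun P lam0 c0 j y)) by apply q2_neg. apply Derive_n_opp. Qed.

Lemma Ha2 : forall k, (k <= n - 1)%nat -> ordge (q2 k) a k /\ Derive_n (q2 k) k a <> 0.
Proof.
  intros k Hk. destruct (gder_a a b n P lam0 c0 Hab sm_P P_ord_a Hexp1 k ltac:(lia)) as [H1 H2].
  split. intros i Hi. rewrite Dn_q2, H1; auto. ring.
  rewrite Dn_q2, H2. destruct (P_ord_a (Datatypes.S k) ltac:(lia)) as [_ Hnz].
  pose proof (c0_pos (Datatypes.S k) ltac:(lia)).
  intros E. apply Hnz. apply Rmult_eq_reg_l with (c0 (Datatypes.S k)). lra. lra.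
Qed.

Lemma Hb2 : forall k, (k <= n - 1)%nat -> ordge (q2 k) b (n - 1 - k) /\ Derive_n (q2 k) (n - 1 - k) b <> 0.
Proof.
  intros k Hk. destruct (gder_b b n P lam0 c0 sm_P P_ord_b k ltac:(lia)) as [H1 H2].
  split. intros i Hi. rewrite Dn_q2, H1; auto. ring.
  rewrite Dn_q2, H2. destruct (P_ord_b k ltac:(lia)) as [_ Hnz].
  pose proof (c0_pos k ltac:(lia)).
  intros E. apply Hnz. apply Rmult_eq_reg_l with (c0 k). lra. lra.
Qed.

Lemma Hcfg2 : forall j, (j < n - 1)%nat -> cfg_bound a b (gfun q2 lam1 w2 j) (n - 1 - 1).
Proof.
  intros j Hj. replace (n - 1 - 1)%nat with (n - 2)%nat by lia. apply cfg_inspan.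
  unfold gfun at 1. apply inspan_comb. intros k Hk.
  destruct (inspan_pad (fun i => - c0 i) k ltac:(lia)) as [gam Hg].
  exists gam. intros x. rewrite <- Hg. unfold q2, gfun. rewrite T_sum. reflexivity.
  intros; apply sm_TP.
Qed.


Lemma c_rel k : (k <= n)%nat -> r k * c0 k = c1 k.
Proof. intros Hk. pose proof (c0_pos k Hk). unfold r. field. lra. Qed.

Lemma gfun_T (c : nat -> R) m x : gfun P lam0 c m x = T lam0 (fun y => sum_n (fun k => c k * P k y) m) x.
Proof. unfold gfun. rewrite T_sum. reflexivity. intros; apply sm_P. Qed.

Lemma gn_zero x : gfun P lam0 c0 n x = 0.
Proof.
  rewrite gfun_T. rewrite (functional_extensionality (fun y => sum_n (fun k => c0 k * P k y) n) (fun y => exp (lam0 * y))).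
  unfold T. rewrite Derive_E. ring. intros; symmetry; apply Hc0.
Qed.

Lemma Dn1 x : gfun P lam0 c1 n x = (lam1 - lam0) * exp (lam1 * x).
Proof.
  rewrite gfun_T. rewrite (functional_extensionality (fun y => sum_n (fun k => c1 k * P k y) n) (fun y => exp (lam1 * y))).
  unfold T. rewrite Derive_E. ring. intros; symmetry; apply Hc1.
Qed.

Lemma tel : forall m, (m < n)%nat -> forall x,
  sum_n (fun j => (r (Datatypes.S j) - r j) * gfun P lam0 c0 j x) m =
  r (Datatypes.S m) * gfun P lam0 c0 m x - gfun P lam0 c1 m x.
Proof.
  induction m; intros Hm x.
  - rewrite sum_O. unfold gfun. rewrite !sum_O. rewrite <- (c_rel 0) by lia. fixR; ring.
  - rewrite sumS, IHm by lia. unfold gfun. rewrite !sumS.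
    rewrite <- (c_rel (Datatypes.S m)) by lia. fixR; ring.
Qed.

Lemma Hexp2 : forall x, a <= x <= b -> exp (lam1 * x) = sum_n (fun k => w2 k * q2 k x) (n - 1).
Proof.
  intros x _.
  rewrite (sum_ext _ (fun k => (- / (lam1 - lam0)) * ((r (Datatypes.S k) - r k) * gfun P lam0 c0 k x))).
  2:{ intros k _. rewrite q2_neg. unfold w2. field. lra. }
  rewrite sum_scal, tel by lia.
  replace (Datatypes.S (n - 1)) with n by lia.
  pose proof (gn_zero x). pose proof (Dn1 x).
  unfold gfun in H, H0 |- *. replace n with (Datatypes.S (n - 1)) in H, H0 by lia.
  rewrite sumS in H, H0.
  replace (Datatypes.S (n - 1)) with n in H, H0 by lia.
  rewrite <- (c_rel n) in H0 by lia.
  assert (lam1 - lam0 > 0) by lra.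
  fixR. field_simplify_eq. 2: lra.
  nra.
Qed.

Lemma w2_pos : forall k, (k <= n - 1)%nat -> w2 k > 0.
Proof. exact (core_pos a b (n - 1) q2 lam1 w2 Hab sm_q2 Hnn2 Ha2 Hb2 Hexp2 Hcfg2). Qed.

Lemma r_incr j : (j < n)%nat -> r j < r (Datatypes.S j).
Proof.
  intros Hj. pose proof (w2_pos j ltac:(lia)). unfold w2 in H.
  assert (lam1 - lam0 > 0) by lra.
  apply Rmult_lt_compat_r with (r := lam1 - lam0) in H; auto.
  unfold Rdiv in H. rewrite Rmult_assoc, Rinv_l in H by lra. lra.
Qed.

End L.


Lemma P_at_a k : (1 <= k <= n)%nat -> P k a = 0.
Proof. intros Hk. destruct (P_ord_a k ltac:(lia)) as [H _]. apply (H 0%nat). lia. Qed.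
Lemma P_at_b k : (k < n)%nat -> P k b = 0.
Proof. intros Hk. destruct (P_ord_b k ltac:(lia)) as [H _]. apply (H 0%nat). lia. Qed.

Lemma exp_split (u v : R) : exp u = exp (u - v) * exp v.
Proof. rewrite <- exp_plus. f_equal. ring. Qed.

Lemma r_a c0 c1 (Hc0 : forall x, exp (lam0 * x) = sum_n (fun k => c0 k * P k x) n)
  (Hc1 : forall x, exp (lam1 * x) = sum_n (fun k => c1 k * P k x) n) :
  r c0 c1 0 = exp ((lam1 - lam0) * a).
Proof.
  pose proof (Hc0 a) as E0. pose proof (Hc1 a) as E1.
  rewrite sum_first in E0, E1 by (intros k Hk; rewrite P_at_a by lia; ring).
  pose proof (c_rel c0 c1 Hc0 0 ltac:(lia)) as CR.
  pose proof (exp_pos (lam0 * a)).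
  assert (r c0 c1 0 * exp (lam0 * a) = exp ((lam1 - lam0) * a) * exp (lam0 * a)).
  { rewrite <- exp_plus. replace ((lam1 - lam0) * a + lam0 * a) with (lam1 * a) by ring.
    rewrite E0, E1, <- CR. ring. }
  apply Rmult_eq_reg_r in H0; lra.
Qed.

Lemma r_b c0 c1 (Hc0 : forall x, exp (lam0 * x) = sum_n (fun k => c0 k * P k x) n)
  (Hc1 : forall x, exp (lam1 * x) = sum_n (fun k => c1 k * P k x) n) :
  r c0 c1 n = exp ((lam1 - lam0) * b).
Proof.
  pose proof (Hc0 b) as E0. pose proof (Hc1 b) as E1.
  rewrite sum_last in E0, E1 by (intros k Hk; rewrite P_at_b by lia; ring).
  pose proof (c_rel c0 c1 Hc0 n ltac:(lia)) as CR.
  pose proof (exp_pos (lam0 * b)).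
  assert (r c0 c1 n * exp (lam0 * b) = exp ((lam1 - lam0) * b) * exp (lam0 * b)).
  { rewrite <- exp_plus. replace ((lam1 - lam0) * b + lam0 * b) with (lam1 * b) by ring.
    rewrite E0, E1, <- CR. ring. }
  apply Rmult_eq_reg_r in H0; lra.
Qed.

Lemma indep (be : nat -> R) : (forall x, a <= x <= b -> sum_n (fun k => be k * P k x) n = 0) ->
  forall k, (k <= n)%nat -> be k = 0.
Proof.
  intros H.
  assert (forall m k, (k <= m)%nat -> (k <= n)%nat -> be k = 0).
  { induction m; intros k Hkm Hkn.
    - assert (k = 0%nat) by lia. subst.
      pose proof (H a ltac:(lra)). rewrite sum_first in H0 by (intros i Hi; rewrite P_at_a by lia; ring).
      destruct (P_ord_a 0 ltac:(lia)) as [_ Hnz]. simpl in Hnz.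
      apply Rmult_integral in H0. destruct H0; auto. contradiction.
    - destruct (Nat.eq_dec k (Datatypes.S m)); [|apply IHm; lia]. subst k.
      assert (HD : Derive_n (fun x => sum_n (fun k => be k * P k x) n) (Datatypes.S m) a = 0).
      { apply (zE1 _ a b Hab). apply sm_sum; intros; apply sm_scal, sm_P. auto. lra. }
      rewrite Dn_sum in HD by (intros; apply sm_scal, sm_P).
      rewrite (sum_single _ (Datatypes.S m)) in HD; auto.
      + rewrite Derive_n_scal_l in HD. destruct (P_ord_a (Datatypes.S m) Hkn) as [_ Hnz].
        apply Rmult_integral in HD. destruct HD; auto. contradiction.
      + intros i Hi Hne. rewrite Derive_n_scal_l.
        destruct (Nat.lt_ge_cases i (Datatypes.S m)).
        * rewrite (IHm i) by lia. ring.
        * destruct (P_ord_a i Hi) as [Hz _]. rewrite Hz by lia. ring. }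
  intros k Hk. apply (H0 k k); auto.
Qed.

Lemma Bop_eq (t al : nat -> R) (f : R -> R) (mu : R) (be : nat -> R) :
  (forall x, exp (mu * x) = sum_n (fun k => be k * P k x) n) ->
  (forall k, (k <= n)%nat -> f (t k) * al k = be k) ->
  forall x, a <= x <= b -> Bop n t al p f x = RtoC (exp (mu * x)).
Proof.
  intros Hbe Hf x Hx. unfold Bop. apply ceq.
  - rewrite fst_Csum. change (fst (RtoC (exp (mu * x)))) with (exp (mu * x)). rewrite Hbe. apply sum_ext. intros k Hk.
    rewrite fst_scalR, Hf by auto. unfold P. rewrite pq_le; auto.
  - rewrite snd_Csum. change (snd (RtoC (exp (mu * x)))) with 0. apply sum_zero. intros k Hk.
    rewrite snd_scalR. pose proof (Q_zero k x Hx). unfold Q in H. rewrite pq_le in H by auto.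
    rewrite H. ring.
Qed.

Lemma Bop_inv (t al : nat -> R) (f : R -> R) (mu : R) :
  (forall x, a <= x <= b -> Bop n t al p f x = RtoC (exp (mu * x))) ->
  forall x, a <= x <= b -> exp (mu * x) = sum_n (fun k => (f (t k) * al k) * P k x) n.
Proof.
  intros H x Hx. pose proof (f_equal fst (H x Hx)). unfold Bop in H0.
  rewrite fst_Csum in H0. change (fst (RtoC (exp (mu * x)))) with (exp (mu * x)) in H0. rewrite <- H0. apply sum_ext. intros k Hk.
  rewrite fst_scalR. unfold P. rewrite pq_le; auto.
Qed.

Lemma coef_unique (be ga : nat -> R) :
  (forall x, a <= x <= b -> sum_n (fun k => be k * P k x) n = sum_n (fun k => ga k * P k x) n) ->
  forall k, (k <= n)%nat -> be k = ga k.
Proof.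
  intros H k Hk.
  assert (be k - ga k = 0).
  { apply (indep (fun k => be k - ga k)); auto. intros x Hx.
    rewrite (sum_ext _ (fun k => be k * P k x - ga k * P k x)) by (intros; ring).
    rewrite sum_minus, H; auto. fixR; ring. }
  lra.
Qed.


Lemma final : exists t alpha : nat -> R,
    ((forall k, (k <= n)%nat -> a <= t k <= b /\ 0 < alpha k) /\
     (forall x, a <= x <= b ->
        Bop n t alpha p (fun y => exp (lam0 * y)) x = RtoC (exp (lam0 * x))) /\
     (forall x, a <= x <= b ->
        Bop n t alpha p (fun y => exp (lam1 * y)) x = RtoC (exp (lam1 * x)))) /\
    (forall t' alpha' : nat -> R,
       (forall k, (k <= n)%nat -> a <= t' k <= b /\ 0 < alpha' k) ->
       (forall x, a <= x <= b ->
          Bop n t' alpha' p (fun y => exp (lam0 * y)) x = RtoC (exp (lam0 * x))) ->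
       (forall x, a <= x <= b ->
          Bop n t' alpha' p (fun y => exp (lam1 * y)) x = RtoC (exp (lam1 * x))) ->
       forall k, (k <= n)%nat -> t' k = t k /\ alpha' k = alpha k).
Proof.
  destruct (span lam0 (or_introl eq_refl)) as [c0 Hc0].
  destruct (span lam1 (or_intror eq_refl)) as [c1 Hc1].
  set (rr := r c0 c1).
  assert (Hdl : lam1 - lam0 > 0) by lra.
  assert (Hinc : forall j, (j < n)%nat -> rr j < rr (Datatypes.S j)) by (intros; apply (r_incr c0 c1 Hc0 Hc1); auto).
  assert (Hlow : forall k, (k <= n)%nat -> rr 0%nat <= rr k).
  { induction k; intros Hk. lra. pose proof (Hinc k ltac:(lia)). specialize (IHk ltac:(lia)). lra. }
  assert (Hup : forall m, (m <= n)%nat -> forall k, (k <= m)%nat -> rr k <= rr m).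
  { induction m; intros Hm k Hk. assert (k = 0%nat) by lia; subst; lra.
    destruct (Nat.eq_dec k (Datatypes.S m)). subst; lra.
    pose proof (Hinc m ltac:(lia)). specialize (IHm ltac:(lia) k ltac:(lia)). lra. }
  assert (Hr0 : rr 0%nat = exp ((lam1 - lam0) * a)) by (apply (r_a c0 c1 Hc0 Hc1)).
  assert (Hrn : rr n = exp ((lam1 - lam0) * b)) by (apply (r_b c0 c1 Hc0 Hc1)).
  assert (Hrpos : forall k, (k <= n)%nat -> rr k > 0).
  { intros k Hk. pose proof (Hlow k Hk). pose proof (exp_pos ((lam1 - lam0) * a)). lra. }
  assert (Hc0p : forall k, (k <= n)%nat -> c0 k > 0) by (intros; apply (c0_pos c0 Hc0); auto).
  assert (CR : forall k, (k <= n)%nat -> rr k * c0 k = c1 k) by (intros; apply (c_rel c0 c1 Hc0); auto).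
  set (t := fun k => ln (rr k) / (lam1 - lam0)).
  set (alpha := fun k => c0 k * exp (- lam0 * t k)).
  assert (Ht : forall k, (k <= n)%nat -> exp ((lam1 - lam0) * t k) = rr k).
  { intros k Hk. unfold t. replace ((lam1 - lam0) * (ln (rr k) / (lam1 - lam0))) with (ln (rr k)) by (field; lra).
    apply exp_ln. apply Hrpos; auto. }
  assert (K0 : forall k, exp (lam0 * t k) * alpha k = c0 k).
  { intros k. unfold alpha. replace (exp (lam0 * t k) * (c0 k * exp (- lam0 * t k))) with (c0 k * (exp (lam0 * t k) * exp (- lam0 * t k))) by ring.
    rewrite <- exp_plus. replace (lam0 * t k + - lam0 * t k) with 0 by ring. rewrite exp_0. ring. }
  assert (K1 : forall k, (k <= n)%nat -> exp (lam1 * t k) * alpha k = c1 k).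
  { intros k Hk. rewrite (exp_split _ (lam0 * t k)).
    replace (lam1 * t k - lam0 * t k) with ((lam1 - lam0) * t k) by ring. rewrite Ht by auto.
    rewrite Rmult_assoc, K0. apply CR; auto. }
  exists t, alpha. split; [split; [|split]|].
  - intros k Hk. split.
    + pose proof (Hlow k Hk). pose proof (Hup n (le_n n) k Hk). rewrite Hr0 in H. rewrite Hrn in H0.
      apply ln_le in H. 2: apply exp_pos. apply ln_le in H0. 2: apply Hrpos; auto.
      rewrite ln_exp in H, H0. unfold t. split.
      * apply Rmult_le_reg_r with (lam1 - lam0). lra. unfold Rdiv. rewrite Rmult_assoc, Rinv_l by lra. lra.
      * apply Rmult_le_reg_r with (lam1 - lam0). lra. unfold Rdiv. rewrite Rmult_assoc, Rinv_l by lra. lra.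
    + unfold alpha. apply Rmult_lt_0_compat. apply Hc0p; auto. apply exp_pos.
  - apply (Bop_eq t alpha (fun y => exp (lam0 * y)) lam0 c0 Hc0). intros; apply K0.
  - apply (Bop_eq t alpha (fun y => exp (lam1 * y)) lam1 c1 Hc1). intros; apply K1; auto.
  - intros t' al' H1 H2 H3 k Hk.
    assert (E0 : exp (lam0 * t' k) * al' k = c0 k).
    { apply (coef_unique (fun k => exp (lam0 * t' k) * al' k) c0); auto. intros x Hx.
      rewrite <- (Bop_inv t' al' (fun y => exp (lam0 * y)) lam0 H2 x Hx). apply Hc0. }
    assert (E1 : exp (lam1 * t' k) * al' k = c1 k).
    { apply (coef_unique (fun k => exp (lam1 * t' k) * al' k) c1); auto. intros x Hx.
      rewrite <- (Bop_inv t' al' (fun y => exp (lam1 * y)) lam1 H3 x Hx). apply Hc1. }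
    destruct (H1 k Hk) as [_ Hal].
    assert (E2 : exp (lam1 * t' k) = rr k * exp (lam0 * t' k)).
    { apply Rmult_eq_reg_r with (al' k). rewrite E1, Rmult_assoc, E0. symmetry; apply CR; auto. lra. }
    assert (E3 : exp ((lam1 - lam0) * t' k) = rr k).
    { pose proof (exp_pos (lam0 * t' k)). rewrite (exp_split _ (lam0 * t' k)) in E2.
      replace (lam1 * t' k - lam0 * t' k) with ((lam1 - lam0) * t' k) in E2 by ring.
      apply Rmult_eq_reg_r in E2; lra. }
    assert (E4 : (lam1 - lam0) * t' k = ln (rr k)) by (rewrite <- E3, ln_exp; auto).
    assert (Htt : t' k = t k) by (unfold t; rewrite <- E4; field; lra).
    split; auto.
    unfold alpha. rewrite <- Htt, <- E0.
    replace (exp (lam0 * t' k) * al' k * exp (- lam0 * t' k)) with (al' k * (exp (lam0 * t' k) * exp (- lam0 * t' k))) by ring.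
    rewrite <- exp_plus. replace (lam0 * t' k + - lam0 * t' k) with 0 by ring. rewrite exp_0. ring.
Qed.

End Main.


Theorem theorem9 (a b lam0 lam1 : R) (lams : list C) (p : nat -> R -> C) :
  let n := S (length lams) in
  a < b ->
  lam0 < lam1 ->
  ExtChebyshev (length lams - 1) (ExpPoly lams) a b ->
  closed_under_conj (ExpPoly lams) ->
  BernsteinBasis n (ExpPoly (RtoC lam0 :: RtoC lam1 :: lams)) a b p ->
  (forall k x, (k <= n)%nat -> a <= x <= b -> Im (p k x) = 0 /\ 0 <= Re (p k x)) ->
  exists t alpha : nat -> R,
    ((forall k, (k <= n)%nat -> a <= t k <= b /\ 0 < alpha k) /\
     (forall x, a <= x <= b ->
        Bop n t alpha p (fun y => exp (lam0 * y)) x = RtoC (exp (lam0 * x))) /\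
     (forall x, a <= x <= b ->
        Bop n t alpha p (fun y => exp (lam1 * y)) x = RtoC (exp (lam1 * x)))) /\
    (forall t' alpha' : nat -> R,
       (forall k, (k <= n)%nat -> a <= t' k <= b /\ 0 < alpha' k) ->
       (forall x, a <= x <= b ->
          Bop n t' alpha' p (fun y => exp (lam0 * y)) x = RtoC (exp (lam0 * x))) ->
       (forall x, a <= x <= b ->
          Bop n t' alpha' p (fun y => exp (lam1 * y)) x = RtoC (exp (lam1 * x))) ->
       forall k, (k <= n)%nat -> t' k = t k /\ alpha' k = alpha k).
Proof.
  intros n Hab Hlam HECT _ HB Hreal.
  exact (final a b lam0 lam1 lams p n eq_refl Hab Hlam HECT HB Hreal).
Qed.
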